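(* Let $\mathcal S=\{s_1,\dots,s_n,(p_1,l_1),\dots,(p_m,l_m)\}$ be a configuration. Suppose there exists $f\in F_{\mathcal S}$ such that (1) $\mathcal Z(f)=\{s_1,\dots,s_n,p_1,\dots,p_m\}$; (2) $\operatorname{inp}_f(s_i)=\emptyset$ for all $i=1,\dots,n$; (3) $\operatorname{ord}_{p_j}(f)=2$ for all $j=1,\dots,m$; (4) for each $j=1,\dots,m$, $D_f''(0)\ne0$, where $D_f$ is the discriminant of $f$ at $p_j$ computed in some affine coordinates centered at $p_j$ in which $l_j=\{y=0\}$. Then $\operatorname{span}(F_{\mathcal S})=I_{\mathcal S}$; in particular $\dim I_{\mathcal S}=\dim F_{\mathcal S}$.
   Context: Notation. $H_k\subseteq\mathbb R[x,y,z]$ is the real vector space of ternary forms of degree $k$. For $I\subseteq H_k$ (or a single form), $\mathcal Z(I)$ is the set of common real zeros in $\mathbb P^2(\mathbb R)$. $P_{3,4}=\{f\in H_4: f\ge0\text{ on }\mathbb P^2(\mathbb R)\}$. Local notation. For $p\in\mathbb P^2(\mathbb R)$, affine coordinates centered at $p$ are obtained by an invertible real linear change of coordinates sending $p$ to $(0:0:1)$ followed by setting $z=1$; $f\in H_4$ becomes $f(x,y)=\sum_{i+j\le4}a_{ij}x^iy^j=f_0+\dots+f_4$ ($f_k$ homogeneous of degree $k$), and $\operatorname{ord}_p(f)$ is the least $k$ with $f_k\ne0$. If $\operatorname{ord}_pf\ge2$, put $\tilde f(x,y)=f(x,xy)/x^2=f_2(1,y)+xf_3(1,y)+x^2f_4(1,y)$;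 the set $\operatorname{inp}_f(p)$ of first-order real infinitely near points of $f$ at $p$ is the set of real directions $[u:w]\in\mathbb P^1(\mathbb R)$ with $f_2(u,w)=0$ (all directions if $f_2=0$). The discriminant of $f$ at $p$ is $D_f(y)=(f_3^2-4f_2f_4)(1,y)$. Sets. $F_s=\{f\in P_{3,4}: f(s)=0\}$, $I_s=\{f\in H_4:\operatorname{ord}_sf\ge2\}$. For a real line $l\ni p$, in affine coordinates centered at $p$ with $l=\{y=0\}$: $F_{(p,l)}=\{f\in P_{3,4}: f(p)=0,\ \tilde f(0,0)=0\}$ and $I_{(p,l)}=\{f\in H_4: a_{00}=a_{10}=a_{01}=a_{20}=a_{11}=a_{30}=0\}$. A configuration is $\mathcal S=\{s_1,\dots,s_n,(p_1,l_1),\dots,(p_m,l_m)\}$ with $s_1,\dots,s_n,p_1,\dots,p_m\in\mathbb P^2(\mathbb R)$ pairwise distinct and $l_j$ real lines with $p_j\in l_j$; $F_{\mathcal S}=\bigcap_iF_{s_i}\cap\bigcap_jF_{(p_j,l_j)}$ and $I_{\mathcal S}=\bigcap_iI_{s_i}\cap\bigcap_jI_{(p_j,l_j)}$. *)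

(* Defs.v *)
From Stdlib Require Import Reals List.
Open Scope R_scope.

(** Points of R^3 (homogeneous coordinates). *)
Definition V3 : Type := (R * R * R)%type.
Definition v0 : V3 := (0, 0, 0).
Definition vx (v : V3) : R := fst (fst v).
Definition vy (v : V3) : R := snd (fst v).
Definition vz (v : V3) : R := snd v.
Definition vscal (r : R) (v : V3) : V3 := (r * vx v, r * vy v, r * vz v).
Definition vdot (u v : V3) : R := vx u * vx v + vy u * vy v + vz u * vz v.

Definition proj_eq (u v : V3) : Prop := exists r : R, r <> 0 /\ v = vscal r u.

(** Ternary quartic forms: [c i j] is the coefficient of x^i y^j z^(4-i-j);
    only the entries with i + j <= 4 are meaningful. *)
Definition form : Type := nat -> nat -> R.

Definition ev (c : form) (v : V3) : R :=
  sum_f_R0 (fun i => sum_f_R0 (fun j =>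
     c i j * vx v ^ i * vy v ^ j * vz v ^ (4 - i - j)) (4 - i)) 4.

Definition feq (f g : form) : Prop :=
  forall i j, (i + j <= 4)%nat -> f i j = g i j.

Definition lincomb (l : list (R * form)) : form :=
  fun i j => fold_right (fun rh acc => fst rh * snd rh i j + acc) 0 l.

Definition in_span (F : form -> Prop) (g : form) : Prop :=
  exists l : list (R * form), (forall rh, In rh l -> F (snd rh)) /\ feq g (lincomb l).

Definition psd (f : form) : Prop := forall v : V3, 0 <= ev f v.

(** Linear change of coordinates given by the columns c1 c2 c3 of an invertible
    matrix A: a point with new coordinates (x,y,z) is x c1 + y c2 + z c3.
    (A is the inverse of the coordinate change of the paper.) *)
Record coords := mkCoords { col1 : V3; col2 : V3; col3 : V3 }.

Definition apply (A : coords) (x y z : R) : V3 :=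
  (x * vx (col1 A) + y * vx (col2 A) + z * vx (col3 A),
   x * vy (col1 A) + y * vy (col2 A) + z * vy (col3 A),
   x * vz (col1 A) + y * vz (col2 A) + z * vz (col3 A)).

Definition det3 (A : coords) : R :=
  let a := col1 A in let b := col2 A in let c := col3 A in
  vx a * (vy b * vz c - vz b * vy c)
  - vx b * (vy a * vz c - vz a * vy c)
  + vx c * (vy a * vz b - vz a * vy b).

(** Affine coordinates centered at p: invertible change sending p to (0:0:1). *)
Definition centered (A : coords) (p : V3) : Prop :=
  det3 A <> 0 /\ proj_eq p (col3 A).

(** ... and in which the line l = {q | L . q = 0} is {y = 0}. *)
Definition centered_line (A : coords) (p L : V3) : Prop :=
  centered A p /\ vdot L (col1 A) = 0 /\ vdot L (col3 A) = 0.

(** [a] is the coefficient array of the dehomogenization f(x,y) = f(A(x,y,1)),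
    i.e. f(x,y) = sum_{i+j<=4} a_{ij} x^i y^j. *)
Definition loc_coeffs (A : coords) (f : form) (a : nat -> nat -> R) : Prop :=
  forall x y : R,
    ev f (apply A x y 1) =
    sum_f_R0 (fun i => sum_f_R0 (fun j => a i j * x ^ i * y ^ j) (4 - i)) 4.

(** Coefficients of f_k(1,y) in y: f_k(1,y) = sum_j a_{k-j,j} y^j. *)
Definition hcoef (a : nat -> nat -> R) (k j : nat) : R :=
  if (j <=? k)%nat then a (k - j)%nat j else 0.

(** Coefficient of y^k in D_f(y) = (f_3^2 - 4 f_2 f_4)(1,y). *)
Definition Dcoef (a : nat -> nat -> R) (k : nat) : R :=
  sum_f_R0 (fun i => hcoef a 3 i * hcoef a 3 (k - i)) k
  - 4 * sum_f_R0 (fun i => hcoef a 2 i * hcoef a 4 (k - i)) k.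

(** D_f''(0) = 2 * (coefficient of y^2 in D_f). *)
Definition D2 (a : nat -> nat -> R) : R := 2 * Dcoef a 2.

(** ord >= 2 in the local coefficients: f_0 = f_1 = 0. *)
Definition ord_ge2 (a : nat -> nat -> R) : Prop :=
  a 0%nat 0%nat = 0 /\ a 1%nat 0%nat = 0 /\ a 0%nat 1%nat = 0.

Definition I_pt (s : V3) (f : form) : Prop :=
  exists A a, centered A s /\ loc_coeffs A f a /\ ord_ge2 a.

Definition I_fl (p L : V3) (f : form) : Prop :=
  exists A a, centered_line A p L /\ loc_coeffs A f a /\ ord_ge2 a /\
    a 2%nat 0%nat = 0 /\ a 1%nat 1%nat = 0 /\ a 3%nat 0%nat = 0.

Definition F_pt (s : V3) (f : form) : Prop := psd f /\ ev f s = 0.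

(** F_(p,l): f(p) = 0 and tilde f(0,0) = f_2(1,0) = a_{20} = 0. *)
Definition F_fl (p L : V3) (f : form) : Prop :=
  psd f /\ ev f p = 0 /\
  exists A a, centered_line A p L /\ loc_coeffs A f a /\ a 2%nat 0%nat = 0.

(** Configurations: s_0..s_{n-1}, (p_0,l_0)..(p_{m-1},l_{m-1}),
    with l_j = {q | L_j . q = 0}. *)
Definition config (n m : nat) (s p L : nat -> V3) : Prop :=
  (forall i, (i < n)%nat -> s i <> v0) /\
  (forall j, (j < m)%nat -> p j <> v0 /\ L j <> v0 /\ vdot (L j) (p j) = 0) /\
  (forall i i', (i < n)%nat -> (i' < n)%nat -> i <> i' -> ~ proj_eq (s i) (s i')) /\
  (forall j j', (j < m)%nat -> (j' < m)%nat -> j <> j' -> ~ proj_eq (p j) (p j')) /\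
  (forall i j, (i < n)%nat -> (j < m)%nat -> ~ proj_eq (s i) (p j)).

Definition F_S (n m : nat) (s p L : nat -> V3) (f : form) : Prop :=
  (forall i, (i < n)%nat -> F_pt (s i) f) /\
  (forall j, (j < m)%nat -> F_fl (p j) (L j) f).

Definition I_S (n m : nat) (s p L : nat -> V3) (f : form) : Prop :=
  (forall i, (i < n)%nat -> I_pt (s i) f) /\
  (forall j, (j < m)%nat -> I_fl (p j) (L j) f).

Definition zeroset_eq (n m : nat) (s p : nat -> V3) (f : form) : Prop :=
  forall q : V3, q <> v0 ->
    (ev f q = 0 <->
     ((exists i, (i < n)%nat /\ proj_eq (s i) q) \/
      (exists j, (j < m)%nat /\ proj_eq (p j) q))).

(** inp_f(s) is empty: ord_s f >= 2 and f_2(u,w) <> 0 for every real direction. *)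
Definition inp_empty (s : V3) (f : form) : Prop :=
  exists A a, centered A s /\ loc_coeffs A f a /\ ord_ge2 a /\
    forall u w : R, (u <> 0 \/ w <> 0) ->
      a 2%nat 0%nat * u ^ 2 + a 1%nat 1%nat * u * w + a 0%nat 2%nat * w ^ 2 <> 0.

Definition ord_eq2 (p : V3) (f : form) : Prop :=
  exists A a, centered A p /\ loc_coeffs A f a /\ ord_ge2 a /\
    ~ (a 2%nat 0%nat = 0 /\ a 1%nat 1%nat = 0 /\ a 0%nat 2%nat = 0).

Definition disc_cond (p L : V3) (f : form) : Prop :=
  exists A a, centered_line A p L /\ loc_coeffs A f a /\ D2 a <> 0.

(* Main.v *)
Require Import Defs.
From Stdlib Require Import Reals List Lra Lia Psatz Classical ClassicalEpsilon.
Open Scope R_scope.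

Definition loc (A : coords) (h : form) : form := fun i j =>
  let u1 := vx (col1 A) in let u2 := vy (col1 A) in let u3 := vz (col1 A) in
  let v1 := vx (col2 A) in let v2 := vy (col2 A) in let v3 := vz (col2 A) in
  let w1 := vx (col3 A) in let w2 := vy (col3 A) in let w3 := vz (col3 A) in
  match i, j with
  | 0%nat, 0%nat => h 0%nat 0%nat * (w3^4) + h 0%nat 1%nat * (w2*w3^3) + h 0%nat 2%nat * (w2^2*w3^2) + h 0%nat 3%nat * (w2^3*w3) + h 0%nat 4%nat * (w2^4) + h 1%nat 0%nat * (w1*w3^3) + h 1%nat 1%nat * (w1*w2*w3^2) + h 1%nat 2%nat * (w1*w2^2*w3) + h 1%nat 3%nat * (w1*w2^3) + h 2%nat 0%nat * (w1^2*w3^2) + h 2%nat 1%nat * (w1^2*w2*w3) + h 2%nat 2%nat * (w1^2*w2^2) + h 3%nat 0%nat * (w1^3*w3) + h 3%nat 1%nat * (w1^3*w2) + h 4%nat 0%nat * (w1^4)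
  | 0%nat, 1%nat => h 0%nat 0%nat * (4*v3*w3^3) + h 0%nat 1%nat * (3*v3*w2*w3^2 + v2*w3^3) + h 0%nat 2%nat * (2*v3*w2^2*w3 + 2*v2*w2*w3^2) + h 0%nat 3%nat * (v3*w2^3 + 3*v2*w2^2*w3) + h 0%nat 4%nat * (4*v2*w2^3) + h 1%nat 0%nat * (3*v3*w1*w3^2 + v1*w3^3) + h 1%nat 1%nat * (2*v3*w1*w2*w3 + v2*w1*w3^2 + v1*w2*w3^2) + h 1%nat 2%nat * (v3*w1*w2^2 + 2*v2*w1*w2*w3 + v1*w2^2*w3) + h 1%nat 3%nat * (3*v2*w1*w2^2 + v1*w2^3) + h 2%nat 0%nat * (2*v3*w1^2*w3 + 2*v1*w1*w3^2) + h 2%nat 1%nat * (v3*w1^2*w2 + v2*w1^2*w3 + 2*v1*w1*w2*w3) + h 2%nat 2%nat * (2*v2*w1^2*w2 + 2*v1*w1*w2^2) + h 3%nat 0%nat * (v3*w1^3 + 3*v1*w1^2*w3) + h 3%nat 1%nat * (v2*w1^3 + 3*v1*w1^2*w2) + h 4%nat 0%nat * (4*v1*w1^3)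
  | 0%nat, 2%nat => h 0%nat 0%nat * (6*v3^2*w3^2) + h 0%nat 1%nat * (3*v3^2*w2*w3 + 3*v2*v3*w3^2) + h 0%nat 2%nat * (v3^2*w2^2 + 4*v2*v3*w2*w3 + v2^2*w3^2) + h 0%nat 3%nat * (3*v2*v3*w2^2 + 3*v2^2*w2*w3) + h 0%nat 4%nat * (6*v2^2*w2^2) + h 1%nat 0%nat * (3*v3^2*w1*w3 + 3*v1*v3*w3^2) + h 1%nat 1%nat * (v3^2*w1*w2 + 2*v2*v3*w1*w3 + 2*v1*v3*w2*w3 + v1*v2*w3^2) + h 1%nat 2%nat * (2*v2*v3*w1*w2 + v2^2*w1*w3 + v1*v3*w2^2 + 2*v1*v2*w2*w3) + h 1%nat 3%nat * (3*v2^2*w1*w2 + 3*v1*v2*w2^2) + h 2%nat 0%nat * (v3^2*w1^2 + 4*v1*v3*w1*w3 + v1^2*w3^2) + h 2%nat 1%nat * (v2*v3*w1^2 + 2*v1*v3*w1*w2 + 2*v1*v2*w1*w3 + v1^2*w2*w3) + h 2%nat 2%nat * (v2^2*w1^2 + 4*v1*v2*w1*w2 + v1^2*w2^2) + h 3%nat 0%nat * (3*v1*v3*w1^2 + 3*v1^2*w1*w3) + h 3%nat 1%nat * (3*v1*v2*w1^2 + 3*v1^2*w1*w2) + h 4%nat 0%nat * (6*v1^2*w1^2)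
  | 0%nat, 3%nat => h 0%nat 0%nat * (4*v3^3*w3) + h 0%nat 1%nat * (v3^3*w2 + 3*v2*v3^2*w3) + h 0%nat 2%nat * (2*v2*v3^2*w2 + 2*v2^2*v3*w3) + h 0%nat 3%nat * (3*v2^2*v3*w2 + v2^3*w3) + h 0%nat 4%nat * (4*v2^3*w2) + h 1%nat 0%nat * (v3^3*w1 + 3*v1*v3^2*w3) + h 1%nat 1%nat * (v2*v3^2*w1 + v1*v3^2*w2 + 2*v1*v2*v3*w3) + h 1%nat 2%nat * (v2^2*v3*w1 + 2*v1*v2*v3*w2 + v1*v2^2*w3) + h 1%nat 3%nat * (v2^3*w1 + 3*v1*v2^2*w2) + h 2%nat 0%nat * (2*v1*v3^2*w1 + 2*v1^2*v3*w3) + h 2%nat 1%nat * (2*v1*v2*v3*w1 + v1^2*v3*w2 + v1^2*v2*w3) + h 2%nat 2%nat * (2*v1*v2^2*w1 + 2*v1^2*v2*w2) + h 3%nat 0%nat * (3*v1^2*v3*w1 + v1^3*w3) + h 3%nat 1%nat * (3*v1^2*v2*w1 + v1^3*w2) + h 4%nat 0%nat * (4*v1^3*w1)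
  | 0%nat, 4%nat => h 0%nat 0%nat * (v3^4) + h 0%nat 1%nat * (v2*v3^3) + h 0%nat 2%nat * (v2^2*v3^2) + h 0%nat 3%nat * (v2^3*v3) + h 0%nat 4%nat * (v2^4) + h 1%nat 0%nat * (v1*v3^3) + h 1%nat 1%nat * (v1*v2*v3^2) + h 1%nat 2%nat * (v1*v2^2*v3) + h 1%nat 3%nat * (v1*v2^3) + h 2%nat 0%nat * (v1^2*v3^2) + h 2%nat 1%nat * (v1^2*v2*v3) + h 2%nat 2%nat * (v1^2*v2^2) + h 3%nat 0%nat * (v1^3*v3) + h 3%nat 1%nat * (v1^3*v2) + h 4%nat 0%nat * (v1^4)
  | 1%nat, 0%nat => h 0%nat 0%nat * (4*u3*w3^3) + h 0%nat 1%nat * (3*u3*w2*w3^2 + u2*w3^3) + h 0%nat 2%nat * (2*u3*w2^2*w3 + 2*u2*w2*w3^2) + h 0%nat 3%nat * (u3*w2^3 + 3*u2*w2^2*w3) + h 0%nat 4%nat * (4*u2*w2^3) + h 1%nat 0%nat * (3*u3*w1*w3^2 + u1*w3^3) + h 1%nat 1%nat * (2*u3*w1*w2*w3 + u2*w1*w3^2 + u1*w2*w3^2) + h 1%nat 2%nat * (u3*w1*w2^2 + 2*u2*w1*w2*w3 + u1*w2^2*w3) + h 1%nat 3%nat * (3*u2*w1*w2^2 + u1*w2^3) + h 2%nat 0%nat * (2*u3*w1^2*w3 + 2*u1*w1*w3^2) + h 2%nat 1%nat * (u3*w1^2*w2 + u2*w1^2*w3 + 2*u1*w1*w2*w3) +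 h 2%nat 2%nat * (2*u2*w1^2*w2 + 2*u1*w1*w2^2) + h 3%nat 0%nat * (u3*w1^3 + 3*u1*w1^2*w3) + h 3%nat 1%nat * (u2*w1^3 + 3*u1*w1^2*w2) + h 4%nat 0%nat * (4*u1*w1^3)
  | 1%nat, 1%nat => h 0%nat 0%nat * (12*u3*v3*w3^2) + h 0%nat 1%nat * (6*u3*v3*w2*w3 + 3*u3*v2*w3^2 + 3*u2*v3*w3^2) + h 0%nat 2%nat * (2*u3*v3*w2^2 + 4*u3*v2*w2*w3 + 4*u2*v3*w2*w3 + 2*u2*v2*w3^2) + h 0%nat 3%nat * (3*u3*v2*w2^2 + 3*u2*v3*w2^2 + 6*u2*v2*w2*w3) + h 0%nat 4%nat * (12*u2*v2*w2^2) + h 1%nat 0%nat * (6*u3*v3*w1*w3 + 3*u3*v1*w3^2 + 3*u1*v3*w3^2) + h 1%nat 1%nat * (2*u3*v3*w1*w2 + 2*u3*v2*w1*w3 + 2*u3*v1*w2*w3 + 2*u2*v3*w1*w3 + u2*v1*w3^2 + 2*u1*v3*w2*w3 + u1*v2*w3^2) + h 1%nat 2%nat * (2*u3*v2*w1*w2 + u3*v1*w2^2 + 2*u2*v3*w1*w2 + 2*u2*v2*w1*w3 + 2*u2*v1*w2*w3 + u1*v3*w2^2 + 2*u1*v2*w2*w3) + h 1%nat 3%nat * (6*u2*v2*w1*w2 + 3*u2*v1*w2^2 + 3*u1*v2*w2^2) + h 2%nat 0%nat * (2*u3*v3*w1^2 + 4*u3*v1*w1*w3 + 4*u1*v3*w1*w3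 + 2*u1*v1*w3^2) + h 2%nat 1%nat * (u3*v2*w1^2 + 2*u3*v1*w1*w2 + u2*v3*w1^2 + 2*u2*v1*w1*w3 + 2*u1*v3*w1*w2 + 2*u1*v2*w1*w3 + 2*u1*v1*w2*w3) + h 2%nat 2%nat * (2*u2*v2*w1^2 + 4*u2*v1*w1*w2 + 4*u1*v2*w1*w2 + 2*u1*v1*w2^2) + h 3%nat 0%nat * (3*u3*v1*w1^2 + 3*u1*v3*w1^2 + 6*u1*v1*w1*w3) + h 3%nat 1%nat * (3*u2*v1*w1^2 + 3*u1*v2*w1^2 + 6*u1*v1*w1*w2) + h 4%nat 0%nat * (12*u1*v1*w1^2)
  | 1%nat, 2%nat => h 0%nat 0%nat * (12*u3*v3^2*w3) + h 0%nat 1%nat * (3*u3*v3^2*w2 + 6*u3*v2*v3*w3 + 3*u2*v3^2*w3) + h 0%nat 2%nat * (4*u3*v2*v3*w2 + 2*u3*v2^2*w3 + 2*u2*v3^2*w2 + 4*u2*v2*v3*w3) + h 0%nat 3%nat * (3*u3*v2^2*w2 + 6*u2*v2*v3*w2 + 3*u2*v2^2*w3) + h 0%nat 4%nat * (12*u2*v2^2*w2) + h 1%nat 0%nat * (3*u3*v3^2*w1 + 6*u3*v1*v3*w3 + 3*u1*v3^2*w3) + h 1%nat 1%nat * (2*u3*v2*v3*w1 + 2*u3*v1*v3*w2 + 2*u3*v1*v2*w3 + u2*v3^2*w1 + 2*u2*v1*v3*w3 + u1*v3^2*w2 + 2*u1*v2*v3*w3) + h 1%nat 2%nat * (u3*v2^2*w1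 + 2*u3*v1*v2*w2 + 2*u2*v2*v3*w1 + 2*u2*v1*v3*w2 + 2*u2*v1*v2*w3 + 2*u1*v2*v3*w2 + u1*v2^2*w3) + h 1%nat 3%nat * (3*u2*v2^2*w1 + 6*u2*v1*v2*w2 + 3*u1*v2^2*w2) + h 2%nat 0%nat * (4*u3*v1*v3*w1 + 2*u3*v1^2*w3 + 2*u1*v3^2*w1 + 4*u1*v1*v3*w3) + h 2%nat 1%nat * (2*u3*v1*v2*w1 + u3*v1^2*w2 + 2*u2*v1*v3*w1 + u2*v1^2*w3 + 2*u1*v2*v3*w1 + 2*u1*v1*v3*w2 + 2*u1*v1*v2*w3) + h 2%nat 2%nat * (4*u2*v1*v2*w1 + 2*u2*v1^2*w2 + 2*u1*v2^2*w1 + 4*u1*v1*v2*w2) + h 3%nat 0%nat * (3*u3*v1^2*w1 + 6*u1*v1*v3*w1 + 3*u1*v1^2*w3) + h 3%nat 1%nat * (3*u2*v1^2*w1 + 6*u1*v1*v2*w1 + 3*u1*v1^2*w2) + h 4%nat 0%nat * (12*u1*v1^2*w1)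
  | 1%nat, 3%nat => h 0%nat 0%nat * (4*u3*v3^3) + h 0%nat 1%nat * (3*u3*v2*v3^2 + u2*v3^3) + h 0%nat 2%nat * (2*u3*v2^2*v3 + 2*u2*v2*v3^2) + h 0%nat 3%nat * (u3*v2^3 + 3*u2*v2^2*v3) + h 0%nat 4%nat * (4*u2*v2^3) + h 1%nat 0%nat * (3*u3*v1*v3^2 + u1*v3^3) + h 1%nat 1%nat * (2*u3*v1*v2*v3 + u2*v1*v3^2 + u1*v2*v3^2) + h 1%nat 2%nat * (u3*v1*v2^2 + 2*u2*v1*v2*v3 + u1*v2^2*v3) + h 1%nat 3%nat * (3*u2*v1*v2^2 + u1*v2^3) + h 2%nat 0%nat * (2*u3*v1^2*v3 + 2*u1*v1*v3^2) + h 2%nat 1%nat * (u3*v1^2*v2 + u2*v1^2*v3 + 2*u1*v1*v2*v3) + h 2%nat 2%nat * (2*u2*v1^2*v2 + 2*u1*v1*v2^2) + h 3%nat 0%nat * (u3*v1^3 + 3*u1*v1^2*v3) + h 3%nat 1%nat * (u2*v1^3 + 3*u1*v1^2*v2) + h 4%nat 0%nat * (4*u1*v1^3)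
  | 2%nat, 0%nat => h 0%nat 0%nat * (6*u3^2*w3^2) + h 0%nat 1%nat * (3*u3^2*w2*w3 + 3*u2*u3*w3^2) + h 0%nat 2%nat * (u3^2*w2^2 + 4*u2*u3*w2*w3 + u2^2*w3^2) + h 0%nat 3%nat * (3*u2*u3*w2^2 + 3*u2^2*w2*w3) + h 0%nat 4%nat * (6*u2^2*w2^2) + h 1%nat 0%nat * (3*u3^2*w1*w3 + 3*u1*u3*w3^2) + h 1%nat 1%nat * (u3^2*w1*w2 + 2*u2*u3*w1*w3 + 2*u1*u3*w2*w3 + u1*u2*w3^2) + h 1%nat 2%nat * (2*u2*u3*w1*w2 + u2^2*w1*w3 + u1*u3*w2^2 + 2*u1*u2*w2*w3) + h 1%nat 3%nat * (3*u2^2*w1*w2 + 3*u1*u2*w2^2) + h 2%nat 0%nat * (u3^2*w1^2 + 4*u1*u3*w1*w3 + u1^2*w3^2) + h 2%nat 1%nat * (u2*u3*w1^2 + 2*u1*u3*w1*w2 + 2*u1*u2*w1*w3 + u1^2*w2*w3) + h 2%nat 2%nat * (u2^2*w1^2 + 4*u1*u2*w1*w2 + u1^2*w2^2) + h 3%nat 0%nat * (3*u1*u3*w1^2 + 3*u1^2*w1*w3) + h 3%nat 1%nat * (3*u1*u2*w1^2 + 3*u1^2*w1*w2) + h 4%nat 0%nat * (6*u1^2*w1^2)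
  | 2%nat, 1%nat => h 0%nat 0%nat * (12*u3^2*v3*w3) + h 0%nat 1%nat * (3*u3^2*v3*w2 + 3*u3^2*v2*w3 + 6*u2*u3*v3*w3) + h 0%nat 2%nat * (2*u3^2*v2*w2 + 4*u2*u3*v3*w2 + 4*u2*u3*v2*w3 + 2*u2^2*v3*w3) + h 0%nat 3%nat * (6*u2*u3*v2*w2 + 3*u2^2*v3*w2 + 3*u2^2*v2*w3) + h 0%nat 4%nat * (12*u2^2*v2*w2) + h 1%nat 0%nat * (3*u3^2*v3*w1 + 3*u3^2*v1*w3 + 6*u1*u3*v3*w3) + h 1%nat 1%nat * (u3^2*v2*w1 + u3^2*v1*w2 + 2*u2*u3*v3*w1 + 2*u2*u3*v1*w3 + 2*u1*u3*v3*w2 + 2*u1*u3*v2*w3 + 2*u1*u2*v3*w3) + h 1%nat 2%nat * (2*u2*u3*v2*w1 + 2*u2*u3*v1*w2 + u2^2*v3*w1 + u2^2*v1*w3 + 2*u1*u3*v2*w2 + 2*u1*u2*v3*w2 + 2*u1*u2*v2*w3) + h 1%nat 3%nat * (3*u2^2*v2*w1 + 3*u2^2*v1*w2 + 6*u1*u2*v2*w2) + h 2%nat 0%nat * (2*u3^2*v1*w1 + 4*u1*u3*v3*w1 + 4*u1*u3*v1*w3 + 2*u1^2*v3*w3) + h 2%nat 1%nat * (2*u2*u3*v1*w1 + 2*u1*u3*v2*w1 + 2*u1*u3*v1*w2 + 2*u1*u2*v3*w1 + 2*u1*u2*v1*w3 + u1^2*v3*w2 + u1^2*v2*w3) + h 2%nat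 2%nat * (2*u2^2*v1*w1 + 4*u1*u2*v2*w1 + 4*u1*u2*v1*w2 + 2*u1^2*v2*w2) + h 3%nat 0%nat * (6*u1*u3*v1*w1 + 3*u1^2*v3*w1 + 3*u1^2*v1*w3) + h 3%nat 1%nat * (6*u1*u2*v1*w1 + 3*u1^2*v2*w1 + 3*u1^2*v1*w2) + h 4%nat 0%nat * (12*u1^2*v1*w1)
  | 2%nat, 2%nat => h 0%nat 0%nat * (6*u3^2*v3^2) + h 0%nat 1%nat * (3*u3^2*v2*v3 + 3*u2*u3*v3^2) + h 0%nat 2%nat * (u3^2*v2^2 + 4*u2*u3*v2*v3 + u2^2*v3^2) + h 0%nat 3%nat * (3*u2*u3*v2^2 + 3*u2^2*v2*v3) + h 0%nat 4%nat * (6*u2^2*v2^2) + h 1%nat 0%nat * (3*u3^2*v1*v3 + 3*u1*u3*v3^2) + h 1%nat 1%nat * (u3^2*v1*v2 + 2*u2*u3*v1*v3 + 2*u1*u3*v2*v3 + u1*u2*v3^2) + h 1%nat 2%nat * (2*u2*u3*v1*v2 + u2^2*v1*v3 + u1*u3*v2^2 + 2*u1*u2*v2*v3) + h 1%nat 3%nat * (3*u2^2*v1*v2 + 3*u1*u2*v2^2) + h 2%nat 0%nat * (u3^2*v1^2 + 4*u1*u3*v1*v3 + u1^2*v3^2) + h 2%nat 1%nat * (u2*u3*v1^2 + 2*u1*u3*v1*v2 + 2*u1*u2*v1*v3 + u1^2*v2*v3) + h 2%nat 2%nat * (u2^2*v1^2 + 4*u1*u2*v1*v2 + u1^2*v2^2)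 + h 3%nat 0%nat * (3*u1*u3*v1^2 + 3*u1^2*v1*v3) + h 3%nat 1%nat * (3*u1*u2*v1^2 + 3*u1^2*v1*v2) + h 4%nat 0%nat * (6*u1^2*v1^2)
  | 3%nat, 0%nat => h 0%nat 0%nat * (4*u3^3*w3) + h 0%nat 1%nat * (u3^3*w2 + 3*u2*u3^2*w3) + h 0%nat 2%nat * (2*u2*u3^2*w2 + 2*u2^2*u3*w3) + h 0%nat 3%nat * (3*u2^2*u3*w2 + u2^3*w3) + h 0%nat 4%nat * (4*u2^3*w2) + h 1%nat 0%nat * (u3^3*w1 + 3*u1*u3^2*w3) + h 1%nat 1%nat * (u2*u3^2*w1 + u1*u3^2*w2 + 2*u1*u2*u3*w3) + h 1%nat 2%nat * (u2^2*u3*w1 + 2*u1*u2*u3*w2 + u1*u2^2*w3) + h 1%nat 3%nat * (u2^3*w1 + 3*u1*u2^2*w2) + h 2%nat 0%nat * (2*u1*u3^2*w1 + 2*u1^2*u3*w3) + h 2%nat 1%nat * (2*u1*u2*u3*w1 + u1^2*u3*w2 + u1^2*u2*w3) + h 2%nat 2%nat * (2*u1*u2^2*w1 + 2*u1^2*u2*w2) + h 3%nat 0%nat * (3*u1^2*u3*w1 + u1^3*w3) + h 3%nat 1%nat * (3*u1^2*u2*w1 + u1^3*w2) + h 4%nat 0%nat * (4*u1^3*w1)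
  | 3%nat, 1%nat => h 0%nat 0%nat * (4*u3^3*v3) + h 0%nat 1%nat * (u3^3*v2 + 3*u2*u3^2*v3) + h 0%nat 2%nat * (2*u2*u3^2*v2 + 2*u2^2*u3*v3) + h 0%nat 3%nat * (3*u2^2*u3*v2 + u2^3*v3) + h 0%nat 4%nat * (4*u2^3*v2) + h 1%nat 0%nat * (u3^3*v1 + 3*u1*u3^2*v3) + h 1%nat 1%nat * (u2*u3^2*v1 + u1*u3^2*v2 + 2*u1*u2*u3*v3) + h 1%nat 2%nat * (u2^2*u3*v1 + 2*u1*u2*u3*v2 + u1*u2^2*v3) + h 1%nat 3%nat * (u2^3*v1 + 3*u1*u2^2*v2) + h 2%nat 0%nat * (2*u1*u3^2*v1 + 2*u1^2*u3*v3) + h 2%nat 1%nat * (2*u1*u2*u3*v1 + u1^2*u3*v2 + u1^2*u2*v3) + h 2%nat 2%nat * (2*u1*u2^2*v1 + 2*u1^2*u2*v2) + h 3%nat 0%nat * (3*u1^2*u3*v1 + u1^3*v3) + h 3%nat 1%nat * (3*u1^2*u2*v1 + u1^3*v2) + h 4%nat 0%nat * (4*u1^3*v1)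
  | 4%nat, 0%nat => h 0%nat 0%nat * (u3^4) + h 0%nat 1%nat * (u2*u3^3) + h 0%nat 2%nat * (u2^2*u3^2) + h 0%nat 3%nat * (u2^3*u3) + h 0%nat 4%nat * (u2^4) + h 1%nat 0%nat * (u1*u3^3) + h 1%nat 1%nat * (u1*u2*u3^2) + h 1%nat 2%nat * (u1*u2^2*u3) + h 1%nat 3%nat * (u1*u2^3) + h 2%nat 0%nat * (u1^2*u3^2) + h 2%nat 1%nat * (u1^2*u2*u3) + h 2%nat 2%nat * (u1^2*u2^2) + h 3%nat 0%nat * (u1^3*u3) + h 3%nat 1%nat * (u1^3*u2) + h 4%nat 0%nat * (u1^4)
  | _, _ => 0
  end.

Lemma loc_hom (A : coords) (h : form) (x y z : R) :
  ev h (apply A x y z) = ev (loc A h) ((x, y), z).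
Proof.
  destruct A as [[[u1 u2] u3] [[v1 v2] v3] [[w1 w2] w3]].
  unfold ev, loc, apply, vx, vy, vz; simpl. ring.
Qed.

Lemma P5 c0 c1 c2 c3 c4 :
  (forall x, c0 + c1*x + c2*x^2 + c3*x^3 + c4*x^4 = 0) ->
  c0 = 0 /\ c1 = 0 /\ c2 = 0 /\ c3 = 0 /\ c4 = 0.
Proof.
  intros H.
  pose proof (H 0) as H0. pose proof (H 1) as H1. pose proof (H (-1)) as H2.
  pose proof (H 2) as H3. pose proof (H (-2)) as H4. simpl in *. lra.
Qed.

Lemma uniq2 (c d : form) :
  (forall x y, ev c ((x, y), 1) = ev d ((x, y), 1)) -> feq c d.
Proof.
  intros H.
  set (e := fun i j => c i j - d i j).
  assert (HE : forall y x,
    (e 0%nat 0%nat + e 0%nat 1%nat * y + e 0%nat 2%nat * y^2 + e 0%nat 3%nat * y^3 + e 0%nat 4%nat * y^4)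
    + (e 1%nat 0%nat + e 1%nat 1%nat * y + e 1%nat 2%nat * y^2 + e 1%nat 3%nat * y^3 + 0 * y^4) * x
    + (e 2%nat 0%nat + e 2%nat 1%nat * y + e 2%nat 2%nat * y^2 + 0 * y^3 + 0 * y^4) * x^2
    + (e 3%nat 0%nat + e 3%nat 1%nat * y + 0 * y^2 + 0 * y^3 + 0 * y^4) * x^3
    + (e 4%nat 0%nat + 0 * y + 0 * y^2 + 0 * y^3 + 0 * y^4) * x^4 = 0).
  { intros y x. specialize (H x y).
    transitivity (ev c ((x, y), 1) - ev d ((x, y), 1)); [|lra].
    unfold e, ev, vx, vy, vz; simpl; ring. }
  assert (HK : forall y, 
    (e 0%nat 0%nat + e 0%nat 1%nat * y + e 0%nat 2%nat * y^2 + e 0%nat 3%nat * y^3 + e 0%nat 4%nat * y^4 = 0) /\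
    (e 1%nat 0%nat + e 1%nat 1%nat * y + e 1%nat 2%nat * y^2 + e 1%nat 3%nat * y^3 + 0 * y^4 = 0) /\
    (e 2%nat 0%nat + e 2%nat 1%nat * y + e 2%nat 2%nat * y^2 + 0 * y^3 + 0 * y^4 = 0) /\
    (e 3%nat 0%nat + e 3%nat 1%nat * y + 0 * y^2 + 0 * y^3 + 0 * y^4 = 0) /\
    (e 4%nat 0%nat + 0 * y + 0 * y^2 + 0 * y^3 + 0 * y^4 = 0)).
  { intros y. apply P5. apply HE. }
  pose proof (P5 _ _ _ _ _ (fun y => proj1 (HK y))) as K0.
  pose proof (P5 _ _ _ _ _ (fun y => proj1 (proj2 (HK y)))) as K1.
  pose proof (P5 _ _ _ _ _ (fun y => proj1 (proj2 (proj2 (HK y))))) as K2.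
  pose proof (P5 _ _ _ _ _ (fun y => proj1 (proj2 (proj2 (proj2 (HK y)))))) as K3.
  pose proof (P5 _ _ _ _ _ (fun y => proj2 (proj2 (proj2 (proj2 (HK y)))))) as K4.
  unfold e in *.
  intros i j Hij.
  destruct i as [|[|[|[|[|i]]]]]; destruct j as [|[|[|[|[|j]]]]]; try lia; lra.
Qed.

Ltac evs := unfold ev, vscal; unfold vx, vy, vz; simpl.

Lemma ev_lin (r : R) (f g : form) (v : V3) :
  ev (fun i j => r * f i j + g i j) v = r * ev f v + ev g v.
Proof. destruct v as [[a b] c]. evs. ring. Qed.

Lemma ev_scal (f : form) (r : R) (v : V3) : ev f (vscal r v) = r^4 * ev f v.
Proof. destruct v as [[a b] c]. evs. ring. Qed.

Lemma ev_feq (f g : form) (v : V3) : feq f g -> ev f v = ev g v.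
Proof.
  intros H. destruct v as [[a b] c]. evs.
  rewrite !H by (simpl; lia). ring.
Qed.

Lemma loc_coeffs_loc (A : coords) (h : form) : loc_coeffs A h (loc A h).
Proof. intros x y. rewrite loc_hom. evs. ring. Qed.

Lemma loc_uniq (A : coords) (h : form) (a : nat -> nat -> R) :
  loc_coeffs A h a -> feq a (loc A h).
Proof.
  intros H. apply uniq2. intros x y. rewrite <- loc_hom. rewrite H. evs. ring.
Qed.

Lemma loc_feq (A : coords) (h1 h2 : form) : feq h1 h2 -> feq (loc A h1) (loc A h2).
Proof.
  intros H. apply uniq2. intros x y. rewrite <- !loc_hom. apply ev_feq, H.
Qed.

Lemma loc_lin (A : coords) (r : R) (f g : form) :
  feq (loc A (fun i j => r * f i j + g i j)) (fun i j => r * loc A f i j + loc A g i j).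
Proof.
  apply uniq2. intros x y. rewrite <- loc_hom, ev_lin, !loc_hom, ev_lin. reflexivity.
Qed.

Definition det3v (a b c : V3) : R := det3 (mkCoords a b c).
Definition coordsOf (A : coords) (v : V3) : V3 :=
  ((det3v v (col2 A) (col3 A) / det3 A, det3v (col1 A) v (col3 A) / det3 A),
    det3v (col1 A) (col2 A) v / det3 A).
Definition applyv (A : coords) (w : V3) : V3 := apply A (vx w) (vy w) (vz w).

Lemma applyv_coordsOf (A : coords) (v : V3) : det3 A <> 0 -> applyv A (coordsOf A v) = v.
Proof.
  destruct A as [[[u1 u2] u3] [[v1 v2] v3] [[w1 w2] w3]]. destruct v as [[a b] c].
  unfold applyv, coordsOf, apply, det3v, det3, vx, vy, vz; simpl. intros H.
  f_equal; [f_equal|]; field; exact H.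
Qed.

Definition matM (A A' : coords) : coords :=
  mkCoords (coordsOf A (col1 A')) (coordsOf A (col2 A')) (coordsOf A (col3 A')).

Lemma apply_lin (A : coords) x y z :
  apply A x y z = ((x * vx (col1 A) + y * vx (col2 A) + z * vx (col3 A),
   x * vy (col1 A) + y * vy (col2 A) + z * vy (col3 A)),
   x * vz (col1 A) + y * vz (col2 A) + z * vz (col3 A)).
Proof. reflexivity. Qed.

Lemma apply_comp (A A' : coords) x y z : det3 A <> 0 ->
  apply A' x y z = applyv A (apply (matM A A') x y z).
Proof.
  intros H.
  pose proof (applyv_coordsOf A (col1 A') H) as E1.
  pose proof (applyv_coordsOf A (col2 A') H) as E2.
  pose proof (applyv_coordsOf A (col3 A') H) as E3.
  destruct A' as [c1 c2 c3]. simpl in *.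
  revert E1 E2 E3. unfold matM. simpl.
  generalize (coordsOf A c1) (coordsOf A c2) (coordsOf A c3).
  intros m1 m2 m3 E1 E2 E3. subst c1 c2 c3.
  destruct A as [[[u1 u2] u3] [[v1 v2] v3] [[w1 w2] w3]].
  destruct m1 as [[a1 a2] a3]; destruct m2 as [[b1 b2] b3]; destruct m3 as [[d1 d2] d3].
  unfold applyv, apply, vx, vy, vz; simpl. f_equal; [f_equal|]; ring.
Qed.

Lemma loc_comp (A A' : coords) (h : form) : det3 A <> 0 ->
  feq (loc A' h) (loc (matM A A') (loc A h)).
Proof.
  intros H. apply uniq2. intros x y.
  rewrite <- !loc_hom. rewrite (apply_comp A A' x y 1 H).
  unfold applyv. rewrite loc_hom. reflexivity.
Qed.

Lemma LL (c : R) (F : R -> R) : continuity_pt F 0 ->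
  (forall x, 0 < x < 1 -> 0 <= c + x * F x) -> 0 <= c.
Proof.
  intros Hc H. destruct (Rle_or_lt 0 c) as [|Hneg]; [assumption|exfalso].
  destruct (Hc 1 Rlt_0_1) as [d [Hd Hd']].
  set (B := Rabs (F 0) + 1).
  assert (HB : 0 < B) by (unfold B; pose proof (Rabs_pos (F 0)); lra).
  set (x := Rmin (d/2) (Rmin (1/2) (- c / (2 * B)))).
  assert (Hx1 : 0 < x).
  { unfold x. repeat apply Rmin_glb_lt; try lra. apply Rdiv_lt_0_compat; lra. }
  assert (Hx2 : x <= d/2) by apply Rmin_l.
  assert (Hx3 : x <= 1/2) by (eapply Rle_trans; [apply Rmin_r|apply Rmin_l]).
  assert (Hx4 : x <= - c / (2 * B)) by (eapply Rle_trans; [apply Rmin_r|apply Rmin_r]).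
  assert (HF : Rabs (F x) <= B).
  { destruct (Req_dec x 0) as [E|E]; [lra|].
    assert (Hl := Hd' x). simpl in Hl. unfold R_dist in Hl.
    assert (Rabs (F x - F 0) < 1).
    { apply Hl. split. split; [exact I| congruence]. rewrite Rminus_0_r, Rabs_right; lra. }
    unfold B. pose proof (Rabs_triang (F x - F 0) (F 0)).
    replace (F x - F 0 + F 0) with (F x) in H1 by ring. lra. }
  assert (Hm : x * F x <= x * B).
  { apply Rmult_le_compat_l; [lra|]. eapply Rle_trans; [apply Rle_abs|exact HF]. }
  assert (Hm2 : x * B <= - c / 2).
  { apply (Rmult_le_compat_r B) in Hx4; [|lra].
    replace (- c / (2 * B) * B) with (- c / 2) in Hx4 by (field; lra). lra. }
  specialize (H x ltac:(lra)). lra.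
Qed.

Lemma LLk (k : nat) (c : R) (F : R -> R) : continuity_pt F 0 ->
  (forall x, 0 < x < 1 -> 0 <= x ^ k * (c + x * F x)) -> 0 <= c.
Proof.
  intros Hc H. apply (LL c F Hc). intros x Hx. specialize (H x Hx).
  assert (0 < x ^ k) by (apply pow_lt; lra).
  apply (Rmult_le_reg_l (x ^ k)); [assumption|]. lra.
Qed.


Lemma psd_loc (A : coords) (h : form) : psd h -> psd (loc A h).
Proof. intros H [[x y] z]. rewrite <- loc_hom. apply H. Qed.

Section PS.
Variable c : form.
Hypothesis Hp : psd c.
Local Notation "'C' i j" := (c i%nat j%nat) (at level 9, i at level 0, j at level 0).

Lemma psd_ord : C 0 0 = 0 -> C 1 0 = 0 /\ C 0 1 = 0.
Proof.
  intros H0. split; apply Rle_antisym.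
  - assert (0 <= - C 1 0); [|lra].
    apply (LLk 1 _ (fun x => C 2 0 - C 3 0 * x + C 4 0 * x^2)); [reg|].
    intros x Hx. replace (x ^ 1 * (- C 1 0 + x * (C 2 0 - C 3 0 * x + C 4 0 * x ^ 2)))
      with (ev c ((-x, 0), 1)) by (evs; rewrite H0; ring). apply Hp.
  - apply (LLk 1 _ (fun x => C 2 0 + C 3 0 * x + C 4 0 * x^2)); [reg|].
    intros x Hx. replace (x ^ 1 * (C 1 0 + x * (C 2 0 + C 3 0 * x + C 4 0 * x ^ 2)))
      with (ev c ((x, 0), 1)) by (evs; rewrite H0; ring). apply Hp.
  - assert (0 <= - C 0 1); [|lra].
    apply (LLk 1 _ (fun x => C 0 2 - C 0 3 * x + C 0 4 * x^2)); [reg|].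
    intros x Hx. replace (x ^ 1 * (- C 0 1 + x * (C 0 2 - C 0 3 * x + C 0 4 * x ^ 2)))
      with (ev c ((0, -x), 1)) by (evs; rewrite H0; ring). apply Hp.
  - apply (LLk 1 _ (fun x => C 0 2 + C 0 3 * x + C 0 4 * x^2)); [reg|].
    intros x Hx. replace (x ^ 1 * (C 0 1 + x * (C 0 2 + C 0 3 * x + C 0 4 * x ^ 2)))
      with (ev c ((0, x), 1)) by (evs; rewrite H0; ring). apply Hp.
Qed.

Lemma psd_q : C 0 0 = 0 -> C 1 0 = 0 -> C 0 1 = 0 ->
  forall u w, 0 <= C 2 0 * u^2 + C 1 1 * u * w + C 0 2 * w^2.
Proof.
  intros H0 H1 H2 u w.
  apply (LLk 2 _ (fun x => (C 3 0 * u^3 + C 2 1 * u^2 * w + C 1 2 * u * w^2 + C 0 3 * w^3)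
     + x * (C 4 0 * u^4 + C 3 1 * u^3 * w + C 2 2 * u^2 * w^2 + C 1 3 * u * w^3 + C 0 4 * w^4))); [reg|].
  intros x Hx.
  match goal with |- 0 <= ?e => replace e with (ev c ((x * u, x * w), 1)) by (evs; rewrite H0, H1, H2; ring) end.
  apply Hp.
Qed.

Lemma psd_fl : C 0 0 = 0 -> C 1 0 = 0 -> C 0 1 = 0 -> C 2 0 = 0 ->
  C 1 1 = 0 /\ C 3 0 = 0.
Proof.
  intros H0 H1 H2 H3. pose proof (psd_q H0 H1 H2) as Q. split; apply Rle_antisym.
  - assert (0 <= - C 1 1); [|lra].
    apply (LLk 1 _ (fun x => C 0 2)); [reg|].
    intros x Hx. specialize (Q 1 (-x)). rewrite H3 in Q.
    match goal with |- 0 <= ?e => replace e with (0 * 1 ^ 2 + C 1 1 * 1 * - x + C 0 2 * (- x) ^ 2) by ring end.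
    exact Q.
  - apply (LLk 1 _ (fun x => C 0 2)); [reg|].
    intros x Hx. specialize (Q 1 x). rewrite H3 in Q.
    match goal with |- 0 <= ?e => replace e with (0 * 1 ^ 2 + C 1 1 * 1 * x + C 0 2 * x ^ 2) by ring end.
    exact Q.
  - assert (0 <= - C 3 0); [|lra].
    apply (LLk 3 _ (fun x => C 4 0)); [reg|].
    intros x Hx.
    match goal with |- 0 <= ?e => replace e with (ev c ((-x, 0), 1)) by (evs; rewrite H0, H1, H3; ring) end.
    apply Hp.
  - apply (LLk 3 _ (fun x => C 4 0)); [reg|].
    intros x Hx.
    match goal with |- 0 <= ?e => replace e with (ev c ((x, 0), 1)) by (evs; rewrite H0, H1, H3; ring) end.
    apply Hp.
Qed.

Lemma psd_w : C 0 0 = 0 -> C 1 0 = 0 -> C 0 1 = 0 -> C 2 0 = 0 -> C 1 1 = 0 -> C 3 0 = 0 ->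
  forall t, 0 <= C 0 2 * t^2 + C 2 1 * t + C 4 0.
Proof.
  intros H0 H1 H2 H3 H4 H5 t.
  apply (LLk 4 _ (fun x => C 1 2 * t^2 + C 3 1 * t + x * (C 0 3 * t^3 + C 2 2 * t^2)
      + x^2 * (C 1 3 * t^3) + x^3 * (C 0 4 * t^4))); [reg|].
  intros x Hx.
  match goal with |- 0 <= ?e => replace e with (ev c ((x, t * x^2), 1)) by (evs; rewrite H0, H1, H2, H3, H4, H5; ring) end.
  apply Hp.
Qed.

End PS.

Lemma quad_nonneg (p q s : R) : 0 <= p -> (forall t, 0 <= p * t^2 + q * t + s) -> q^2 <= 4 * p * s.
Proof.
  intros Hp H. destruct (Rle_lt_or_eq_dec 0 p Hp) as [Hp'|Hp'].
  - specialize (H (- q / (2 * p))).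
    replace (p * (- q / (2 * p)) ^ 2 + q * (- q / (2 * p)) + s) with ((4 * p * s - q^2) / (4 * p)) in H by (field; lra).
    assert (0 <= 4 * p * s - q^2); [|lra].
    apply (Rmult_le_compat_r (4 * p)) in H; [|lra].
    replace ((4 * p * s - q ^ 2) / (4 * p) * (4 * p)) with (4 * p * s - q^2) in H by (field; lra). lra.
  - subst p. destruct (Req_dec q 0) as [Hq|Hq].
    + subst q. lra.
    + exfalso. specialize (H (- (s + 1) / q)).
      replace (0 * (- (s + 1) / q) ^ 2 + q * (- (s + 1) / q) + s) with (-1) in H by (field; auto). lra.
Qed.

Definition pat_o (b : form) : Prop := b 0%nat 0%nat = 0 /\ b 1%nat 0%nat = 0 /\ b 0%nat 1%nat = 0.
Definition pat_l (b : form) : Prop := pat_o b /\ b 2%nat 0%nat = 0 /\ b 1%nat 1%nat = 0 /\ b 3%nat 0%nat = 0.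

Lemma pat_ord2 (M : coords) (b : form) :
  vx (col3 M) = 0 -> vy (col3 M) = 0 -> pat_o b -> pat_o (loc M b).
Proof.
  destruct M as [[[u1 u2] u3] [[v1 v2] v3] [[w1 w2] w3]].
  unfold vx, vy; simpl. intros -> -> [H0 [H1 H2]].
  unfold pat_o, loc, vx, vy, vz; simpl. rewrite H0, H1, H2. repeat split; ring.
Qed.

Lemma pat_fl (M : coords) (b : form) :
  vx (col3 M) = 0 -> vy (col3 M) = 0 -> vy (col1 M) = 0 -> pat_l b -> pat_l (loc M b).
Proof.
  destruct M as [[[u1 u2] u3] [[v1 v2] v3] [[w1 w2] w3]].
  unfold vx, vy; simpl. intros -> -> -> [[H0 [H1 H2]] [H3 [H4 H5]]].
  unfold pat_l, pat_o, loc, vx, vy, vz; simpl. rewrite H0, H1, H2, H3, H4, H5. repeat split; ring.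
Qed.

Lemma coords_center (A : coords) (p t : V3) :
  centered A p -> proj_eq p t -> vx (coordsOf A t) = 0 /\ vy (coordsOf A t) = 0 /\ vz (coordsOf A t) <> 0.
Proof.
  intros [HD [r [Hr E3]]] [l [Hl Et]].
  destruct A as [c1 c2 c3]. simpl in *. subst c3 t.
  destruct c1 as [[a1 a2] a3]; destruct c2 as [[b1 b2] b3]; destruct p as [[p1 p2] p3].
  unfold coordsOf, det3v, det3, vscal, vx, vy, vz in *; simpl in *.
  split; [|split].
  - unfold Rdiv; match goal with |- ?n * _ = 0 => replace n with 0 by ring end; ring.
  - unfold Rdiv; match goal with |- ?n * _ = 0 => replace n with 0 by ring end; ring.
  - intros Hz. 
    assert (E : (a1 * (b2 * (l * p3) - b3 * (l * p2)) - b1 * (a2 * (l * p3) - a3 * (l * p2)) +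
     l * p1 * (a2 * b3 - a3 * b2)) = l / r * (a1 * (b2 * (r * p3) - b3 * (r * p2)) - b1 * (a2 * (r * p3) - a3 * (r * p2)) +
      r * p1 * (a2 * b3 - a3 * b2))) by (field; exact Hr).
    rewrite E in Hz. unfold Rdiv in Hz. rewrite Rmult_assoc, Rinv_r in Hz by exact HD.
    rewrite Rmult_1_r in Hz. apply Rmult_integral in Hz as [Hz|Hz]; [exact (Hl Hz)|].
    exact (Rinv_neq_0_compat r Hr Hz).
Qed.

Lemma det_orth (a b c L : V3) : L <> v0 -> vdot L a = 0 -> vdot L b = 0 -> vdot L c = 0 ->
  det3v a b c = 0.
Proof.
  destruct a as [[a1 a2] a3]; destruct b as [[b1 b2] b3]; destruct c as [[c1 c2] c3];
  destruct L as [[l1 l2] l3].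
  unfold det3v, det3, vdot, v0, vx, vy, vz; simpl. intros HL Ha Hb Hc.
  set (D := a1 * (b2 * c3 - b3 * c2) - b1 * (a2 * c3 - a3 * c2) + c1 * (a2 * b3 - a3 * b2)).
  assert (E1 : D * l1 = 0).
  { transitivity ((l1*a1+l2*a2+l3*a3) * (b2*c3-b3*c2) + (l1*b1+l2*b2+l3*b3) * (c2*a3-c3*a2)
       + (l1*c1+l2*c2+l3*c3) * (a2*b3-a3*b2)); [unfold D; ring|]. rewrite Ha, Hb, Hc; ring. }
  assert (E2 : D * l2 = 0).
  { transitivity ((l1*a1+l2*a2+l3*a3) * (b3*c1-b1*c3) + (l1*b1+l2*b2+l3*b3) * (c3*a1-c1*a3)
       + (l1*c1+l2*c2+l3*c3) * (a3*b1-a1*b3)); [unfold D; ring|]. rewrite Ha, Hb, Hc; ring. }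
  assert (E3 : D * l3 = 0).
  { transitivity ((l1*a1+l2*a2+l3*a3) * (b1*c2-b2*c1) + (l1*b1+l2*b2+l3*b3) * (c1*a2-c2*a1)
       + (l1*c1+l2*c2+l3*c3) * (a1*b2-a2*b1)); [unfold D; ring|]. rewrite Ha, Hb, Hc; ring. }
  destruct (Req_dec D 0) as [|HD]; [assumption|exfalso]. apply HL.
  apply Rmult_integral in E1; apply Rmult_integral in E2; apply Rmult_integral in E3.
  destruct E1 as [|E1]; [contradiction|]; destruct E2 as [|E2]; [contradiction|];
  destruct E3 as [|E3]; [contradiction|]. subst; reflexivity.
Qed.

Lemma matM_o (A A' : coords) (p : V3) : centered A p -> centered A' p ->
  vx (col3 (matM A A')) = 0 /\ vy (col3 (matM A A')) = 0.
Proof.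
  intros HA [_ HA']. destruct (coords_center A p (col3 A') HA HA') as [H1 [H2 _]].
  unfold matM; simpl. auto.
Qed.

Lemma matM_l (A A' : coords) (p L : V3) : L <> v0 -> centered_line A p L -> centered_line A' p L ->
  vy (col1 (matM A A')) = 0.
Proof.
  intros HL [HA [Ha1 Ha3]] [HA' [Hb1 Hb3]].
  unfold matM; simpl. unfold coordsOf, vy; simpl.
  rewrite (det_orth (col1 A) (col1 A') (col3 A) L HL Ha1 Hb1 Ha3). unfold Rdiv; ring.
Qed.

Lemma transfer_o (A A' : coords) (p : V3) (h : form) : centered A p -> centered A' p ->
  pat_o (loc A h) -> pat_o (loc A' h).
Proof.
  intros HA HA' Hp. destruct (matM_o A A' p HA HA') as [E1 E2].
  pose proof (loc_comp A A' h (proj1 HA)) as Hc.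
  pose proof (pat_ord2 _ _ E1 E2 Hp) as [P0 [P1 P2]].
  unfold pat_o. rewrite !Hc by (simpl; lia). auto.
Qed.

Lemma transfer_l (A A' : coords) (p L : V3) (h : form) : L <> v0 ->
  centered_line A p L -> centered_line A' p L ->
  pat_l (loc A h) -> pat_l (loc A' h).
Proof.
  intros HL HA HA' Hp. destruct (matM_o A A' p (proj1 HA) (proj1 HA')) as [E1 E2].
  pose proof (matM_l A A' p L HL HA HA') as E3.
  pose proof (loc_comp A A' h (proj1 (proj1 HA))) as Hc.
  pose proof (pat_fl _ _ E1 E2 E3 Hp) as [[P0 [P1 P2]] [P3 [P4 P5]]].
  unfold pat_l, pat_o. rewrite !Hc by (simpl; lia). auto 10.
Qed.


Lemma pd2 (p q s u v : R) : 0 < p -> 0 < s -> q^2 < 4 * p * s ->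
  (4 * p * s - q^2) / (4 * (p + s)) * (u^2 + v^2) <= p * u^2 + q * u * v + s * v^2.
Proof.
  intros Hp Hs Hq.
  assert (E : 4 * (p + s) * (p * u^2 + q * u * v + s * v^2) - (4 * p * s - q^2) * (u^2 + v^2)
     = (2*p*u + q*v)^2 + (2*s*v + q*u)^2) by ring.
  assert (0 <= (2*p*u + q*v)^2 + (2*s*v + q*u)^2) by (apply Rplus_le_le_0_compat; apply pow2_ge_0).
  apply (Rmult_le_reg_l (4 * (p + s))); [lra|].
  replace (4 * (p + s) * ((4 * p * s - q ^ 2) / (4 * (p + s)) * (u ^ 2 + v ^ 2)))
    with ((4 * p * s - q^2) * (u^2 + v^2)) by (field; lra). lra.
Qed.



Lemma abs_term (a m B : R) : Rabs m <= B -> - (Rabs a * B) <= a * m.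
Proof.
  intros H. assert (Rabs (a * m) <= Rabs a * B).
  { rewrite Rabs_mult. apply Rmult_le_compat_l; [apply Rabs_pos|exact H]. }
  pose proof (Rle_abs (- (a * m))). rewrite Rabs_Ropp in H1. lra.
Qed.

Lemma combine (F G w kap K Kd r eps : R) : 0 <= w -> kap * w - K * r * w <= F -> - (Kd * w) <= G ->
  0 <= K -> 0 <= Kd -> 0 < kap -> 0 <= r -> K * r <= kap / 2 -> eps * Kd <= kap / 2 -> 0 <= eps ->
  0 <= F + eps * G.
Proof.
  intros Hw HF HG HK HKd Hk Hr H1 H2 He.
  assert (eps * G >= - (eps * Kd) * w) by nra.
  assert (0 <= (kap - K * r - eps * Kd) * w) by (apply Rmult_le_pos; lra). nra.
Qed.

Lemma small_r (K kap : R) : 0 <= K -> 0 < kap ->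
  0 < Rmin 1 (kap / (2 * K + 1)) /\ Rmin 1 (kap / (2 * K + 1)) <= 1 /\
  K * Rmin 1 (kap / (2 * K + 1)) <= kap / 2.
Proof.
  intros HK Hk. split; [|split].
  - apply Rmin_glb_lt; [lra|]. apply Rdiv_lt_0_compat; lra.
  - apply Rmin_l.
  - assert (K * Rmin 1 (kap / (2 * K + 1)) <= K * (kap / (2 * K + 1))).
    { apply Rmult_le_compat_l; [lra|apply Rmin_r]. }
    assert (K * (kap / (2 * K + 1)) <= kap / 2).
    { apply (Rmult_le_reg_r (2 * (2 * K + 1))); [lra|].
      replace (K * (kap / (2 * K + 1)) * (2 * (2 * K + 1))) with (2 * K * kap) by (field; lra).
      nra. }
    lra.
Qed.

Lemma abs_le_mul (a b r : R) : Rabs a <= r -> Rabs b <= r -> r <= 1 -> Rabs (a * b) <= r.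
Proof.
  intros Ha Hb Hr. rewrite Rabs_mult.
  pose proof (Rabs_pos a); pose proof (Rabs_pos b).
  apply Rle_trans with (r * 1); [|lra]. apply Rmult_le_compat; lra.
Qed.

Lemma bnd5 (a1 a2 a3 a4 a5 x y r : R) : Rabs x <= r -> Rabs y <= r -> r <= 1 ->
  - ((Rabs a1 + Rabs a2 + Rabs a3 + Rabs a4 + Rabs a5) * r) <=
   a1 * x + a2 * y + a3 * (x * x) + a4 * (x * y) + a5 * (y * y).
Proof.
  intros Hx Hy Hr.
  pose proof (abs_term a1 x r Hx). pose proof (abs_term a2 y r Hy).
  pose proof (abs_term a3 (x*x) r (abs_le_mul _ _ _ Hx Hx Hr)).
  pose proof (abs_term a4 (x*y) r (abs_le_mul _ _ _ Hx Hy Hr)).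
  pose proof (abs_term a5 (y*y) r (abs_le_mul _ _ _ Hy Hy Hr)). lra.
Qed.

Definition K5 (a1 a2 a3 a4 a5 : R) := Rabs a1 + Rabs a2 + Rabs a3 + Rabs a4 + Rabs a5.

Lemma K5_pos a1 a2 a3 a4 a5 : 0 <= K5 a1 a2 a3 a4 a5.
Proof. unfold K5. pose proof (Rabs_pos a1); pose proof (Rabs_pos a2); pose proof (Rabs_pos a3);
  pose proof (Rabs_pos a4); pose proof (Rabs_pos a5). lra. Qed.

Lemma shrink (J s r : R) : 0 <= J -> 0 <= s -> r <= 1 -> J * r * s <= J * s.
Proof. intros H1 H2 H3. rewrite Rmult_assoc. apply Rmult_le_compat_l; [lra|].
  apply Rle_trans with (1 * s); [apply Rmult_le_compat_r; lra|lra]. Qed.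

Lemma sq_mul_bnd (s L K r : R) : 0 <= s -> - (K * r) <= L -> - (K * r * s) <= s * L.
Proof. intros Hs HL. nra. Qed.

Local Notation "'C' c i j" := (c i%nat j%nat) (at level 9, c at level 0, i at level 0, j at level 0).

Lemma decomp_o (c : form) x y : pat_o c ->
  ev c ((x, y), 1) = (C c 2 0 * x^2 + C c 1 1 * x * y + C c 0 2 * y^2)
   + (x * x) * (C c 3 0 * x + C c 2 1 * y + C c 4 0 * (x * x) + C c 3 1 * (x * y) + C c 2 2 * (y * y))
   + (y * y) * (C c 1 2 * x + C c 0 3 * y + 0 * (x * x) + C c 1 3 * (x * y) + C c 0 4 * (y * y)).
Proof. intros [H0 [H1 H2]]. evs. rewrite H0, H1, H2. ring. Qed.

Lemma local_s (c d : form) : pat_o c -> pat_o d ->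
  0 < C c 2 0 -> 0 < C c 0 2 -> (C c 1 1)^2 < 4 * C c 2 0 * C c 0 2 ->
  exists r, 0 < r /\ exists eps, 0 < eps /\ forall x y, Rabs x <= r -> Rabs y <= r ->
    0 <= ev c ((x, y), 1) + eps * ev d ((x, y), 1).
Proof.
  intros Pc Pd H20 H02 Hdisc.
  set (kap := (4 * C c 2 0 * C c 0 2 - (C c 1 1)^2) / (4 * (C c 2 0 + C c 0 2))).
  assert (Hk : 0 < kap) by (unfold kap; apply Rdiv_lt_0_compat; lra).
  set (K1 := K5 (C c 3 0) (C c 2 1) (C c 4 0) (C c 3 1) (C c 2 2)).
  set (K2 := K5 (C c 1 2) (C c 0 3) 0 (C c 1 3) (C c 0 4)).
  set (J1 := K5 (C d 3 0) (C d 2 1) (C d 4 0) (C d 3 1) (C d 2 2)).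
  set (J2 := K5 (C d 1 2) (C d 0 3) 0 (C d 1 3) (C d 0 4)).
  set (Kd := Rabs (C d 2 0) + Rabs (C d 1 1) + Rabs (C d 0 2) + J1 + J2).
  assert (HK : 0 <= K1 + K2) by (pose proof (K5_pos (C c 3 0) (C c 2 1) (C c 4 0) (C c 3 1) (C c 2 2));
     pose proof (K5_pos (C c 1 2) (C c 0 3) 0 (C c 1 3) (C c 0 4)); unfold K1, K2; lra).
  assert (HKd : 0 <= Kd).
  { unfold Kd, J1, J2. pose proof (K5_pos (C d 3 0) (C d 2 1) (C d 4 0) (C d 3 1) (C d 2 2));
     pose proof (K5_pos (C d 1 2) (C d 0 3) 0 (C d 1 3) (C d 0 4));
     pose proof (Rabs_pos (C d 2 0)); pose proof (Rabs_pos (C d 1 1)); pose proof (Rabs_pos (C d 0 2)). lra. }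
  destruct (small_r (K1 + K2) kap HK Hk) as [Hr0 [Hr1 Hr2]].
  destruct (small_r Kd kap HKd Hk) as [He0 [He1 He2]].
  exists (Rmin 1 (kap / (2 * (K1 + K2) + 1))). split; [exact Hr0|].
  exists (Rmin 1 (kap / (2 * Kd + 1))). split; [exact He0|].
  intros x y Hx Hy.
  set (r := Rmin 1 (kap / (2 * (K1 + K2) + 1))) in *.
  apply (combine _ _ (x^2 + y^2) kap (K1 + K2) Kd r); try lra.
  - pose proof (pow2_ge_0 x); pose proof (pow2_ge_0 y); lra.
  - rewrite decomp_o by exact Pc.
    pose proof (pd2 (C c 2 0) (C c 1 1) (C c 0 2) x y H20 H02 Hdisc) as Q. fold kap in Q.
    pose proof (sq_mul_bnd (x * x) _ K1 r (Rle_0_sqr x) (bnd5 (C c 3 0) (C c 2 1) (C c 4 0) (C c 3 1) (C c 2 2) x y r Hx Hy Hr1)).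
    pose proof (sq_mul_bnd (y * y) _ K2 r (Rle_0_sqr y) (bnd5 (C c 1 2) (C c 0 3) 0 (C c 1 3) (C c 0 4) x y r Hx Hy Hr1)).
    fold (K5 (C c 3 0) (C c 2 1) (C c 4 0) (C c 3 1) (C c 2 2)) in H. fold K1 in H.
    fold (K5 (C c 1 2) (C c 0 3) 0 (C c 1 3) (C c 0 4)) in H0. fold K2 in H0.
    assert (E1 : x^2 = x*x) by ring. assert (E2 : y^2 = y*y) by ring. rewrite E1, E2 in *.
    unfold K1, K2 in *.
    pose proof (K5_pos (C c 3 0) (C c 2 1) (C c 4 0) (C c 3 1) (C c 2 2)).
    pose proof (K5_pos (C c 1 2) (C c 0 3) 0 (C c 1 3) (C c 0 4)).
    assert (0 <= r * (x * x)) by (apply Rmult_le_pos; [lra|apply Rle_0_sqr]).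
    assert (0 <= r * (y * y)) by (apply Rmult_le_pos; [lra|apply Rle_0_sqr]).
    nra.
  - rewrite decomp_o by exact Pd.
    pose proof (sq_mul_bnd (x * x) _ J1 r (Rle_0_sqr x) (bnd5 (C d 3 0) (C d 2 1) (C d 4 0) (C d 3 1) (C d 2 2) x y r Hx Hy Hr1)).
    pose proof (sq_mul_bnd (y * y) _ J2 r (Rle_0_sqr y) (bnd5 (C d 1 2) (C d 0 3) 0 (C d 1 3) (C d 0 4) x y r Hx Hy Hr1)).
    fold (K5 (C d 3 0) (C d 2 1) (C d 4 0) (C d 3 1) (C d 2 2)) in H. fold J1 in H.
    fold (K5 (C d 1 2) (C d 0 3) 0 (C d 1 3) (C d 0 4)) in H0. fold J2 in H0.
    assert (HJ1 : 0 <= J1) by apply K5_pos. assert (HJ2 : 0 <= J2) by apply K5_pos.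
    pose proof (shrink J1 (x * x) r HJ1 (Rle_0_sqr x) Hr1).
    pose proof (shrink J2 (y * y) r HJ2 (Rle_0_sqr y) Hr1).
    assert (T1 : - (Rabs (C d 2 0) * (x * x)) <= C d 2 0 * x^2).
    { replace (x^2) with (x*x) by ring. apply abs_term. rewrite Rabs_right; [lra|apply Rle_ge, Rle_0_sqr]. }
    assert (T2 : - (Rabs (C d 0 2) * (y * y)) <= C d 0 2 * y^2).
    { replace (y^2) with (y*y) by ring. apply abs_term. rewrite Rabs_right; [lra|apply Rle_ge, Rle_0_sqr]. }
    assert (T3 : - (Rabs (C d 1 1) * (x * x + y * y)) <= C d 1 1 * x * y).
    { rewrite Rmult_assoc. apply abs_term. rewrite Rabs_mult.
      pose proof (Rabs_pos x); pose proof (Rabs_pos y).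
      assert (Rabs x * Rabs x = x * x) by (rewrite <- Rabs_mult; apply Rabs_right; apply Rle_ge, Rle_0_sqr).
      assert (Rabs y * Rabs y = y * y) by (rewrite <- Rabs_mult; apply Rabs_right; apply Rle_ge, Rle_0_sqr).
      nra. }
    unfold Kd. assert (E1 : x^2 = x*x) by ring. assert (E2 : y^2 = y*y) by ring. rewrite E1, E2 in *.
    pose proof (Rle_0_sqr x); pose proof (Rle_0_sqr y). unfold Rsqr in *.
    pose proof (Rabs_pos (C d 2 0)); pose proof (Rabs_pos (C d 1 1)); pose proof (Rabs_pos (C d 0 2)).
    nra.
Qed.

Lemma decomp_l (c : form) x y : pat_l c ->
  ev c ((x, y), 1) = (C c 0 2 * y^2 + C c 2 1 * y * (x * x) + C c 4 0 * (x * x)^2)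
   + (y * y) * (C c 1 2 * x + C c 0 3 * y + C c 2 2 * (x * x) + C c 1 3 * (x * y) + C c 0 4 * (y * y))
   + C c 3 1 * (x * (x * x * y)).
Proof. intros [[H0 [H1 H2]] [H3 [H4 H5]]]. evs. rewrite H0, H1, H2, H3, H4, H5. ring. Qed.

Lemma xxy_bnd (x y : R) : Rabs (x * x * y) <= y * y + (x * x) * (x * x).
Proof.
  rewrite Rabs_mult. rewrite (Rabs_right (x * x)) by (apply Rle_ge, Rle_0_sqr).
  pose proof (Rabs_pos y). assert (Rabs y * Rabs y = y * y) by
    (rewrite <- Rabs_mult; apply Rabs_right; apply Rle_ge, Rle_0_sqr).
  pose proof (Rle_0_sqr (x * x - Rabs y)). unfold Rsqr in *.
  pose proof (Rle_0_sqr x). pose proof (Rle_0_sqr y). unfold Rsqr in *. nra.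
Qed.

Lemma xxxy_bnd (x y r : R) : Rabs x <= r -> Rabs (x * (x * x * y)) <= r * (y * y + (x * x) * (x * x)).
Proof.
  intros Hx. rewrite Rabs_mult. apply Rmult_le_compat; try apply Rabs_pos; auto. apply xxy_bnd.
Qed.

Lemma local_p (c d : form) : pat_l c -> pat_l d ->
  0 < C c 0 2 -> 0 < C c 4 0 -> (C c 2 1)^2 < 4 * C c 0 2 * C c 4 0 ->
  exists r, 0 < r /\ exists eps, 0 < eps /\ forall x y, Rabs x <= r -> Rabs y <= r ->
    0 <= ev c ((x, y), 1) + eps * ev d ((x, y), 1).
Proof.
  intros Pc Pd H02 H40 Hdisc.
  set (kap := (4 * C c 0 2 * C c 4 0 - (C c 2 1)^2) / (4 * (C c 0 2 + C c 4 0))).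
  assert (Hk : 0 < kap) by (unfold kap; apply Rdiv_lt_0_compat; lra).
  set (K1 := K5 (C c 1 2) (C c 0 3) (C c 2 2) (C c 1 3) (C c 0 4)).
  set (J1 := K5 (C d 1 2) (C d 0 3) (C d 2 2) (C d 1 3) (C d 0 4)).
  set (K := K1 + Rabs (C c 3 1)).
  set (Kd := Rabs (C d 0 2) + Rabs (C d 2 1) + Rabs (C d 4 0) + J1 + Rabs (C d 3 1)).
  assert (HK1 : 0 <= K1) by apply K5_pos. assert (HJ1 : 0 <= J1) by apply K5_pos.
  assert (HK : 0 <= K) by (unfold K; pose proof (Rabs_pos (C c 3 1)); lra).
  assert (HKd : 0 <= Kd).
  { unfold Kd. pose proof (Rabs_pos (C d 0 2)); pose proof (Rabs_pos (C d 2 1));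
    pose proof (Rabs_pos (C d 4 0)); pose proof (Rabs_pos (C d 3 1)). lra. }
  destruct (small_r K kap HK Hk) as [Hr0 [Hr1 Hr2]].
  destruct (small_r Kd kap HKd Hk) as [He0 [He1 He2]].
  exists (Rmin 1 (kap / (2 * K + 1))). split; [exact Hr0|].
  exists (Rmin 1 (kap / (2 * Kd + 1))). split; [exact He0|].
  intros x y Hx Hy.
  set (r := Rmin 1 (kap / (2 * K + 1))) in *.
  assert (Hw : 0 <= y * y + (x * x) * (x * x)).
  { pose proof (Rle_0_sqr y); pose proof (Rle_0_sqr (x * x)). unfold Rsqr in *. lra. }
  assert (Hyy : 0 <= y * y) by apply Rle_0_sqr.
  assert (Hxx : 0 <= (x * x) * (x * x)) by apply Rle_0_sqr.
  apply (combine _ _ (y * y + (x * x) * (x * x)) kap K Kd r); try lra.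
  - rewrite decomp_l by exact Pc.
    pose proof (pd2 (C c 0 2) (C c 2 1) (C c 4 0) y (x * x) H02 H40 Hdisc) as Q. fold kap in Q.
    pose proof (sq_mul_bnd (y * y) _ K1 r Hyy (bnd5 (C c 1 2) (C c 0 3) (C c 2 2) (C c 1 3) (C c 0 4) x y r Hx Hy Hr1)) as T1.
    fold (K5 (C c 1 2) (C c 0 3) (C c 2 2) (C c 1 3) (C c 0 4)) in T1. fold K1 in T1.
    pose proof (abs_term (C c 3 1) _ _ (xxxy_bnd x y r Hx)) as T2.
    assert (E1 : y^2 = y*y) by ring. assert (E2 : (x*x)^2 = (x*x)*(x*x)) by ring. rewrite E1, E2 in *.
    unfold K.
    assert (0 <= r * (x * x * (x * x))) by (apply Rmult_le_pos; lra).
    assert (0 <= K1 * (r * (x * x * (x * x)))) by (apply Rmult_le_pos; lra).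
    nra.
  - rewrite decomp_l by exact Pd.
    pose proof (sq_mul_bnd (y * y) _ J1 r Hyy (bnd5 (C d 1 2) (C d 0 3) (C d 2 2) (C d 1 3) (C d 0 4) x y r Hx Hy Hr1)) as T1.
    fold (K5 (C d 1 2) (C d 0 3) (C d 2 2) (C d 1 3) (C d 0 4)) in T1. fold J1 in T1.
    pose proof (abs_term (C d 3 1) _ _ (xxxy_bnd x y r Hx)) as T2.
    pose proof (shrink J1 (y * y) r HJ1 Hyy Hr1) as T3.
    pose proof (shrink (Rabs (C d 3 1)) (y * y + x * x * (x * x)) r (Rabs_pos _) Hw Hr1) as T4.
    assert (T5 : - (Rabs (C d 0 2) * (y * y)) <= C d 0 2 * y^2).
    { replace (y^2) with (y*y) by ring. apply abs_term. rewrite Rabs_right; lra. }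
    assert (T6 : - (Rabs (C d 4 0) * (x * x * (x * x))) <= C d 4 0 * (x * x)^2).
    { replace ((x * x)^2) with (x*x*(x*x)) by ring. apply abs_term. rewrite Rabs_right; lra. }
    assert (T7 : - (Rabs (C d 2 1) * (y * y + x * x * (x * x))) <= C d 2 1 * y * (x * x)).
    { replace (C d 2 1 * y * (x * x)) with (C d 2 1 * (x * x * y)) by ring. apply abs_term. apply xxy_bnd. }
    unfold Kd.
    pose proof (Rabs_pos (C d 0 2)); pose proof (Rabs_pos (C d 2 1)); pose proof (Rabs_pos (C d 4 0)).
    assert (0 <= Rabs (C d 0 2) * (x * x * (x * x))) by (apply Rmult_le_pos; lra).
    assert (0 <= Rabs (C d 4 0) * (y * y)) by (apply Rmult_le_pos; lra).
    assert (0 <= J1 * (x * x * (x * x))) by (apply Rmult_le_pos; lra).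
    nra.
Qed.

Definition near3 (d : R) (v t : V3) : Prop :=
  Rabs (vx v - vx t) < d /\ Rabs (vy v - vy t) < d /\ Rabs (vz v - vz t) < d.

Definition cont3 (F : V3 -> R) (t : V3) : Prop :=
  forall e, 0 < e -> exists d, 0 < d /\ forall v, near3 d v t -> Rabs (F v - F t) < e.

Lemma cont3_const a t : cont3 (fun _ => a) t.
Proof. intros e He. exists 1. split; [lra|]. intros v _. rewrite Rminus_diag, Rabs_R0. exact He. Qed.

Lemma cont3_x t : cont3 (fun v => vx v) t.
Proof. intros e He. exists e. split; [exact He|]. intros v [H _]. exact H. Qed.
Lemma cont3_y t : cont3 (fun v => vy v) t.
Proof. intros e He. exists e. split; [exact He|]. intros v [_ [H _]]. exact H. Qed.
Lemma cont3_z t : cont3 (fun v => vz v) t.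
Proof. intros e He. exists e. split; [exact He|]. intros v [_ [_ H]]. exact H. Qed.

Lemma near3_mono d d' v t : d <= d' -> near3 d v t -> near3 d' v t.
Proof. unfold near3. intros H [H1 [H2 H3]]. repeat split; lra. Qed.

Lemma cont3_plus F G t : cont3 F t -> cont3 G t -> cont3 (fun v => F v + G v) t.
Proof.
  intros HF HG e He.
  destruct (HF (e/2) ltac:(lra)) as [d1 [Hd1 H1]]. destruct (HG (e/2) ltac:(lra)) as [d2 [Hd2 H2]].
  exists (Rmin d1 d2). split; [apply Rmin_glb_lt; lra|]. intros v Hv.
  specialize (H1 v (near3_mono _ _ _ _ (Rmin_l d1 d2) Hv)).
  specialize (H2 v (near3_mono _ _ _ _ (Rmin_r d1 d2) Hv)).
  replace (F v + G v - (F t + G t)) with ((F v - F t) + (G v - G t)) by ring.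
  pose proof (Rabs_triang (F v - F t) (G v - G t)). lra.
Qed.

Lemma cont3_minus F G t : cont3 F t -> cont3 G t -> cont3 (fun v => F v - G v) t.
Proof.
  intros HF HG e He.
  destruct (HF (e/2) ltac:(lra)) as [d1 [Hd1 H1]]. destruct (HG (e/2) ltac:(lra)) as [d2 [Hd2 H2]].
  exists (Rmin d1 d2). split; [apply Rmin_glb_lt; lra|]. intros v Hv.
  specialize (H1 v (near3_mono _ _ _ _ (Rmin_l d1 d2) Hv)).
  specialize (H2 v (near3_mono _ _ _ _ (Rmin_r d1 d2) Hv)).
  replace (F v - G v - (F t - G t)) with ((F v - F t) + - (G v - G t)) by ring.
  pose proof (Rabs_triang (F v - F t) (- (G v - G t))). rewrite Rabs_Ropp in H. lra.
Qed.

Lemma cont3_mult F G t : cont3 F t -> cont3 G t -> cont3 (fun v => F v * G v) t.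
Proof.
  intros HF HG e He.
  set (a := Rabs (F t)). set (b := Rabs (G t)).
  assert (Ha : 0 <= a) by apply Rabs_pos. assert (Hb : 0 <= b) by apply Rabs_pos.
  set (e1 := e / (2 * (b + 1))). set (e2 := Rmin 1 (e / (2 * (a + 1)))).
  assert (He1 : 0 < e1) by (unfold e1; apply Rdiv_lt_0_compat; lra).
  assert (He2 : 0 < e2) by (unfold e2; apply Rmin_glb_lt; [lra|apply Rdiv_lt_0_compat; lra]).
  destruct (HF e1 He1) as [d1 [Hd1 H1]]. destruct (HG e2 He2) as [d2 [Hd2 H2]].
  exists (Rmin d1 d2). split; [apply Rmin_glb_lt; lra|]. intros v Hv.
  specialize (H1 v (near3_mono _ _ _ _ (Rmin_l d1 d2) Hv)).
  specialize (H2 v (near3_mono _ _ _ _ (Rmin_r d1 d2) Hv)).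
  replace (F v * G v - F t * G t) with ((F v - F t) * G v + F t * (G v - G t)) by ring.
  pose proof (Rabs_triang ((F v - F t) * G v) (F t * (G v - G t))).
  rewrite !Rabs_mult in H.
  assert (HG1 : Rabs (G v) <= b + 1).
  { pose proof (Rabs_triang (G v - G t) (G t)). replace (G v - G t + G t) with (G v) in H0 by ring.
    assert (e2 <= 1) by apply Rmin_l. fold b in H0. lra. }
  assert (T1 : Rabs (F v - F t) * Rabs (G v) <= e1 * (b + 1)).
  { apply Rmult_le_compat; try apply Rabs_pos; lra. }
  assert (T2 : Rabs (F t) * Rabs (G v - G t) <= a * e2).
  { apply Rmult_le_compat_l; [exact Ha|lra]. }
  assert (T3 : e1 * (b + 1) = e / 2) by (unfold e1; field; lra).
  assert (T4 : a * e2 < e / 2).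
  { apply Rle_lt_trans with (a * (e / (2 * (a + 1)))).
    - apply Rmult_le_compat_l; [exact Ha|apply Rmin_r].
    - apply (Rmult_lt_reg_r (2 * (a + 1))); [lra|].
      replace (a * (e / (2 * (a + 1))) * (2 * (a + 1))) with (a * e) by (field; lra). nra. }
  fold a in T2. fold a in H. clearbody a b e1 e2. lra.
Qed.

Lemma cont3_opp F t : cont3 F t -> cont3 (fun v => - F v) t.
Proof.
  intros HF e He. destruct (HF e He) as [d [Hd H]]. exists d. split; [exact Hd|].
  intros v Hv. replace (- F v - - F t) with (- (F v - F t)) by ring. rewrite Rabs_Ropp. auto.
Qed.

Ltac cont3_tac :=
  repeat first [ apply cont3_opp | apply cont3_plus | apply cont3_minus | apply cont3_mult | apply cont3_x | apply cont3_y
               | apply cont3_z | apply cont3_const ].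

Lemma ev_cont (f : form) (t : V3) : cont3 (ev f) t.
Proof. unfold ev. simpl. cont3_tac. Qed.

From Coquelicot Require Import Compactness.

Definition insph (v : V3) : Prop := ~ (Rabs (vx v) < 1 /\ Rabs (vy v) < 1 /\ Rabs (vz v) < 1).

Lemma abs_le_b (x r : R) : Rabs x <= r -> - r <= x <= r.
Proof. intros H. pose proof (Rle_abs x). pose proof (Rle_abs (- x)). rewrite Rabs_Ropp in H1. lra. Qed.

Section G.
Variables f g : form.
Hypothesis Hpsd : psd f.
Hypothesis Hloc : forall t, t <> v0 -> ev f t = 0 ->
  exists d, 0 < d /\ exists e, 0 < e /\ forall v, near3 d v t -> 0 <= ev f v + e * ev g v.

Lemma loc_all (t : V3) : exists de : R * R, 0 < fst de /\ 0 < snd de /\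
  forall v, near3 (fst de) v t -> insph v -> 0 <= ev f v + snd de * ev g v.
Proof.
  destruct (classic (Rabs (vx t) < 1/2 /\ Rabs (vy t) < 1/2 /\ Rabs (vz t) < 1/2)) as [Hs|Hs].
  - exists (1/2, 1). simpl. split; [lra|split; [lra|]].
    intros v [H1 [H2 H3]] Hv. exfalso. apply Hv. destruct Hs as [K1 [K2 K3]].
    pose proof (Rabs_triang (vx v - vx t) (vx t)). pose proof (Rabs_triang (vy v - vy t) (vy t)).
    pose proof (Rabs_triang (vz v - vz t) (vz t)).
    replace (vx v - vx t + vx t) with (vx v) in H by ring.
    replace (vy v - vy t + vy t) with (vy v) in H0 by ring.
    replace (vz v - vz t + vz t) with (vz v) in H4 by ring. lra.
  - assert (Ht : t <> v0).
    { intros E. apply Hs. subst t. unfold v0, vx, vy, vz; simpl. rewrite Rabs_R0. lra. }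
    destruct (Req_dec (ev f t) 0) as [Hz|Hz].
    + destruct (Hloc t Ht Hz) as [d [Hd [e [He H]]]]. exists (d, e). simpl. auto.
    + assert (Hpos : 0 < ev f t) by (pose proof (Hpsd t); lra).
      destruct (ev_cont f t (ev f t / 2) ltac:(lra)) as [d1 [Hd1 H1]].
      destruct (ev_cont g t 1 ltac:(lra)) as [d2 [Hd2 H2]].
      exists (Rmin d1 d2, (ev f t / 2) / (Rabs (ev g t) + 1)). simpl.
      pose proof (Rabs_pos (ev g t)).
      split; [apply Rmin_glb_lt; lra|]. split; [apply Rdiv_lt_0_compat; lra|].
      intros v Hv _.
      specialize (H1 v (near3_mono _ _ _ _ (Rmin_l d1 d2) Hv)).
      specialize (H2 v (near3_mono _ _ _ _ (Rmin_r d1 d2) Hv)).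
      apply Rabs_def2 in H1. apply Rabs_def2 in H2.
      assert (- (Rabs (ev g t)) <= ev g t) by (pose proof (Rle_abs (- ev g t)) as Hq; rewrite Rabs_Ropp in Hq; lra).
      set (e := ev f t / 2 / (Rabs (ev g t) + 1)).
      assert (Ee : e * (Rabs (ev g t) + 1) = ev f t / 2) by (unfold e; field; lra).
      assert (He : 0 < e) by (unfold e; apply Rdiv_lt_0_compat; lra).
      clearbody e.
      assert (e * ev g v >= - (e * (Rabs (ev g t) + 1))) by nra. lra.
Qed.

Definition tn (v : V3) : Tn 3 R := (vx v, (vy v, (vz v, tt))).
Definition nt (t : Tn 3 R) : V3 := match t with (a, (b, (c, _))) => ((a, b), c) end.

Lemma global_eps : exists eps, 0 < eps /\ forall v, 0 <= ev f v + eps * ev g v.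
Proof.
  set (F := fun t : Tn 3 R => proj1_sig (constructive_indefinite_description _ (loc_all (nt t)))).
  assert (HF : forall t, 0 < fst (F t) /\ 0 < snd (F t) /\
     forall v, near3 (fst (F t)) v (nt t) -> insph v -> 0 <= ev f v + snd (F t) * ev g v).
  { intros t. unfold F. destruct (constructive_indefinite_description _ (loc_all (nt t))) as [de Hde].
    exact Hde. }
  set (delta := fun t => mkposreal (fst (F t)) (proj1 (HF t))).
  pose proof (compactness_list 3 (-1, (-1, (-1, tt))) (1, (1, (1, tt))) delta) as Hc.
  apply NNPP in Hc. destruct Hc as [l Hl].
  set (eps := fold_right Rmin 1 (map (fun t => snd (F t)) l)).
  assert (Heps : 0 < eps).
  { unfold eps. clear Hl. induction l as [|t l IH]; simpl; [lra|].
    apply Rmin_glb_lt; [apply HF|exact IH]. }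
  assert (Hle : forall t, In t l -> eps <= snd (F t)).
  { unfold eps. clear Hl Heps eps. induction l as [|t' l IH]; simpl; [tauto|].
    intros t [E|E]; [subst; apply Rmin_l|]. eapply Rle_trans; [apply Rmin_r|]. apply IH, E. }
  exists eps. split; [exact Heps|].
  assert (Hsph : forall u, Rabs (vx u) <= 1 -> Rabs (vy u) <= 1 -> Rabs (vz u) <= 1 -> insph u ->
            0 <= ev f u + eps * ev g u).
  { intros u Hx Hy Hz Hs.
    destruct (Hl (tn u)) as [t [Ht [_ Hcl]]].
    { unfold tn; simpl. apply abs_le_b in Hx. apply abs_le_b in Hy.
      apply abs_le_b in Hz. repeat split; lra. }
    destruct (HF t) as [_ [He Hloc']].
    assert (H1 : 0 <= ev f u + snd (F t) * ev g u).
    { apply Hloc'; [|exact Hs]. destruct t as [t1 [t2 [t3 []]]]. unfold tn, nt, near3 in *; simpl in *.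
      tauto. }
    pose proof (Hle t Ht). pose proof (Hpsd u).
    destruct (Rle_or_lt 0 (ev g u)).
    - assert (0 <= eps * ev g u) by (apply Rmult_le_pos; lra). lra.
    - assert (eps * ev g u >= snd (F t) * ev g u) by nra. lra. }
  intros v. destruct v as [[a b] c].
  set (m := Rmax (Rabs a) (Rmax (Rabs b) (Rabs c))).
  assert (Ha : Rabs a <= m) by apply Rmax_l.
  assert (Hb : Rabs b <= m) by (eapply Rle_trans; [apply Rmax_l|apply Rmax_r]).
  assert (Hc : Rabs c <= m) by (eapply Rle_trans; [apply Rmax_r|apply Rmax_r]).
  assert (Hm : m = Rabs a \/ m = Rabs b \/ m = Rabs c).
  { unfold m. destruct (Rle_dec (Rabs b) (Rabs c)).
    - rewrite (Rmax_right (Rabs b)) by lra. destruct (Rle_dec (Rabs a) (Rabs c)).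
      + rewrite Rmax_right by lra. auto.
      + rewrite Rmax_left by lra. auto.
    - rewrite (Rmax_left (Rabs b)) by lra. destruct (Rle_dec (Rabs a) (Rabs b)).
      + rewrite Rmax_right by lra. auto.
      + rewrite Rmax_left by lra. auto. }
  clearbody m.
  destruct (Req_dec m 0) as [Hm0|Hm0].
  - assert (a = 0) by (pose proof (abs_le_b a 0 ltac:(lra)); lra).
    assert (b = 0) by (pose proof (abs_le_b b 0 ltac:(lra)); lra).
    assert (c = 0) by (pose proof (abs_le_b c 0 ltac:(lra)); lra). subst.
    unfold ev, vx, vy, vz; simpl. lra.
  - assert (Hmp : 0 < m) by (pose proof (Rabs_pos a); lra).
    set (u := vscal (/ m) ((a, b), c)).
    assert (Eu : ((a, b), c) = vscal m u).
    { unfold u, vscal, vx, vy, vz; simpl. f_equal; [f_equal|]; field; lra. }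
    rewrite Eu, !ev_scal.
    assert (Hu : 0 <= ev f u + eps * ev g u).
    { assert (Hax : forall z, Rabs z <= m -> Rabs (/ m * z) <= 1).
      { intros z Hz. rewrite Rabs_mult, Rabs_inv, (Rabs_right m) by lra.
        apply (Rmult_le_reg_l m); [lra|]. rewrite <- Rmult_assoc, Rinv_r by lra. lra. }
      apply Hsph; unfold u, vscal, vx, vy, vz; simpl; try apply Hax; auto.
      intros [K1 [K2 K3]].
      assert (Hone : forall z, Rabs z = m -> Rabs (/ m * z) = 1).
      { intros z Hz. rewrite Rabs_mult, Rabs_inv, Hz, (Rabs_right m) by lra. field; lra. }
      unfold vx, vy, vz in K1, K2, K3; simpl in K1, K2, K3.
      destruct Hm as [Hm|[Hm|Hm]]; symmetry in Hm;
        [pose proof (Hone a Hm) as Hq|pose proof (Hone b Hm) as Hq|pose proof (Hone c Hm) as Hq];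
        clear - Hq K1 K2 K3; lra. }
    assert (0 < m ^ 4) by (apply pow_lt; lra).
    replace (m ^ 4 * ev f u + eps * (m ^ 4 * ev g u)) with (m ^ 4 * (ev f u + eps * ev g u)) by ring.
    apply Rmult_le_pos; lra.
Qed.

End G.


Lemma loc00 (A : coords) (h : form) : loc A h 0%nat 0%nat = ev h (col3 A).
Proof.
  transitivity (ev (loc A h) ((0, 0), 1)); [evs; ring|].
  rewrite <- loc_hom. f_equal. destruct A as [c1 c2 [[w1 w2] w3]].
  unfold apply, vx, vy, vz; simpl. f_equal; [f_equal|]; ring.
Qed.

Lemma zero_c00 (A : coords) (z : V3) (h : form) : centered A z -> ev h z = 0 -> loc A h 0%nat 0%nat = 0.
Proof.
  intros [_ [r [_ E]]] H. rewrite loc00, E, ev_scal, H. ring.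
Qed.

Lemma c00_zero (A : coords) (z : V3) (h : form) : centered A z -> loc A h 0%nat 0%nat = 0 -> ev h z = 0.
Proof.
  intros [_ [r [Hr E]]] H. rewrite loc00, E, ev_scal in H.
  apply Rmult_integral in H as [H|H]; [|exact H]. exfalso. apply (pow_nonzero r 4 Hr H).
Qed.

Lemma ord_pat (A : coords) (h : form) (a : nat -> nat -> R) : loc_coeffs A h a -> ord_ge2 a -> pat_o (loc A h).
Proof.
  intros Hl [H0 [H1 H2]]. pose proof (loc_uniq A h a Hl) as U.
  unfold pat_o. rewrite <- !U by (simpl; lia). auto.
Qed.

Lemma psd_pat_o (A : coords) (z : V3) (h : form) : psd h -> centered A z -> ev h z = 0 -> pat_o (loc A h).
Proof.
  intros Hp Hc Hz. pose proof (zero_c00 A z h Hc Hz) as H0.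
  destruct (psd_ord (loc A h) (psd_loc A h Hp) H0). unfold pat_o; auto.
Qed.

Lemma fl_pat (A : coords) (p L : V3) (h : form) : L <> v0 -> F_fl p L h -> centered_line A p L -> pat_l (loc A h).
Proof.
  intros HL [Hp [Hz [A' [a [HA' [Hl H20]]]]]] HA.
  apply (transfer_l A' A p L h HL HA' HA).
  pose proof (psd_pat_o A' p h Hp (proj1 HA') Hz) as [P0 [P1 P2]].
  assert (Q20 : loc A' h 2%nat 0%nat = 0) by (rewrite <- (loc_uniq A' h a Hl) by (simpl; lia); exact H20).
  destruct (psd_fl (loc A' h) (psd_loc A' h Hp) P0 P1 P2 Q20).
  unfold pat_l, pat_o; auto 10.
Qed.

Lemma Ifl_pat (A : coords) (p L : V3) (h : form) : L <> v0 -> I_fl p L h -> centered_line A p L -> pat_l (loc A h).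
Proof.
  intros HL [A' [a [HA' [Hl [Ho [H20 [H11 H30]]]]]]] HA.
  apply (transfer_l A' A p L h HL HA' HA).
  pose proof (ord_pat A' h a Hl Ho) as Po. pose proof (loc_uniq A' h a Hl) as U.
  split; [exact Po|]. rewrite <- !U by (simpl; lia). auto.
Qed.

Lemma Ipt_pat (A : coords) (s : V3) (h : form) : I_pt s h -> centered A s -> pat_o (loc A h).
Proof.
  intros [A' [a [HA' [Hl Ho]]]] HA.
  apply (transfer_o A' A s h HA' HA). exact (ord_pat A' h a Hl Ho).
Qed.

Lemma cont3_coords (A : coords) (t : V3) :
  cont3 (fun v => vx (coordsOf A v)) t /\ cont3 (fun v => vy (coordsOf A v)) t /\
  cont3 (fun v => vz (coordsOf A v)) t.
Proof.
  unfold coordsOf, det3v, det3, Rdiv; simpl. split; [|split]; cont3_tac.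
Qed.

Lemma cone (A : coords) (z t : V3) (f g : form) (r e : R) :
  centered A z -> proj_eq z t -> 0 < r ->
  (forall x y, Rabs x <= r -> Rabs y <= r -> 0 <= ev (loc A f) ((x, y), 1) + e * ev (loc A g) ((x, y), 1)) ->
  exists d, 0 < d /\ forall v, near3 d v t -> 0 <= ev f v + e * ev g v.
Proof.
  intros HA Hzt Hr H.
  destruct (coords_center A z t HA Hzt) as [X0 [Y0 Z0]].
  destruct (cont3_coords A t) as [CX [CY CZ]].
  set (z0 := vz (coordsOf A t)) in *.
  assert (Hz0 : 0 < Rabs z0) by (apply Rabs_pos_lt; exact Z0).
  destruct (CX (r * Rabs z0 / 2) ltac:(apply Rdiv_lt_0_compat; [apply Rmult_lt_0_compat|]; lra)) as [d1 [Hd1 H1]].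
  destruct (CY (r * Rabs z0 / 2) ltac:(apply Rdiv_lt_0_compat; [apply Rmult_lt_0_compat|]; lra)) as [d2 [Hd2 H2]].
  destruct (CZ (Rabs z0 / 2) ltac:(lra)) as [d3 [Hd3 H3]].
  exists (Rmin d1 (Rmin d2 d3)). split; [repeat apply Rmin_glb_lt; lra|].
  intros v Hv.
  assert (Hm1 : Rmin d1 (Rmin d2 d3) <= d1) by apply Rmin_l.
  assert (Hm2 : Rmin d1 (Rmin d2 d3) <= d2) by (eapply Rle_trans; [apply Rmin_r|apply Rmin_l]).
  assert (Hm3 : Rmin d1 (Rmin d2 d3) <= d3) by (eapply Rle_trans; [apply Rmin_r|apply Rmin_r]).
  specialize (H1 v (near3_mono _ _ _ _ Hm1 Hv)). specialize (H2 v (near3_mono _ _ _ _ Hm2 Hv)).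
  specialize (H3 v (near3_mono _ _ _ _ Hm3 Hv)).
  rewrite X0 in H1. rewrite Y0 in H2. fold z0 in H3. rewrite Rminus_0_r in H1, H2.
  set (X := vx (coordsOf A v)) in *. set (Y := vy (coordsOf A v)) in *. set (Z := vz (coordsOf A v)) in *.
  assert (HZ : Rabs z0 / 2 < Rabs Z).
  { pose proof (Rabs_triang (z0 - Z) Z). replace (z0 - Z + Z) with z0 in H0 by ring.
    rewrite <- Rabs_Ropp in H3. replace (- (Z - z0)) with (z0 - Z) in H3 by ring. lra. }
  assert (HZ0 : Z <> 0) by (intros E; rewrite E, Rabs_R0 in HZ; lra).
  assert (Ev : v = vscal Z (apply A (X / Z) (Y / Z) 1)).
  { rewrite <- (applyv_coordsOf A v (proj1 HA)) at 1. unfold applyv. fold X Y Z.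
    destruct A as [[[u1 u2] u3] [[v1 v2] v3] [[w1 w2] w3]].
    unfold apply, vscal, vx, vy, vz; simpl. f_equal; [f_equal|]; field; exact HZ0. }
  rewrite Ev, !ev_scal, !loc_hom.
  assert (Hq : forall w, Rabs w < r * Rabs z0 / 2 -> Rabs (w / Z) <= r).
  { intros w Hw. unfold Rdiv. rewrite Rabs_mult, Rabs_inv.
    apply (Rmult_le_reg_r (Rabs Z)); [lra|]. rewrite Rmult_assoc, Rinv_l by lra.
    assert (r * Rabs z0 / 2 <= r * Rabs Z) by (apply (Rmult_le_reg_r 2); [lra|]; nra). lra. }
  specialize (H (X / Z) (Y / Z) (Hq X H1) (Hq Y H2)).
  assert (0 <= Z ^ 4) by (replace (Z^4) with ((Z^2)^2) by ring; apply pow2_ge_0).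
  replace (Z ^ 4 * ev (loc A f) (X / Z, Y / Z, 1) + e * (Z ^ 4 * ev (loc A g) (X / Z, Y / Z, 1)))
    with (Z ^ 4 * (ev (loc A f) (X / Z, Y / Z, 1) + e * ev (loc A g) (X / Z, Y / Z, 1))) by ring.
  apply Rmult_le_pos; assumption.
Qed.

Lemma span_zero (A : coords) (l : list (R * form)) i j : (i + j <= 4)%nat ->
  (forall rh, In rh l -> loc A (snd rh) i j = 0) -> loc A (lincomb l) i j = 0.
Proof.
  intros Hij. induction l as [|[r h] l IH]; intros H.
  - unfold lincomb, loc; simpl.
    destruct i as [|[|[|[|[|i]]]]]; destruct j as [|[|[|[|[|j]]]]]; simpl; try ring.
  - assert (E : feq (lincomb ((r, h) :: l)) (fun i j => r * h i j + lincomb l i j))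
      by (intros a b _; reflexivity).
    rewrite (loc_feq A _ _ E i j Hij), (loc_lin A r h (lincomb l) i j Hij).
    pose proof (H (r, h) (or_introl eq_refl)) as Hh. simpl in Hh.
    rewrite Hh, IH; [ring|].
    intros rh Hrh. apply H. right. exact Hrh.
Qed.

Lemma s_facts (A : coords) (s0 : V3) (f : form) (a : nat -> nat -> R) :
  psd f -> loc_coeffs A f a -> ord_ge2 a ->
  (forall u w : R, (u <> 0 \/ w <> 0) ->
      a 2%nat 0%nat * u ^ 2 + a 1%nat 1%nat * u * w + a 0%nat 2%nat * w ^ 2 <> 0) ->
  pat_o (loc A f) /\ 0 < loc A f 2%nat 0%nat /\ 0 < loc A f 0%nat 2%nat /\
  (loc A f 1%nat 1%nat)^2 < 4 * loc A f 2%nat 0%nat * loc A f 0%nat 2%nat.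
Proof.
  intros Hp Hl Ho HPD.
  pose proof (ord_pat A f a Hl Ho) as Po. pose proof (loc_uniq A f a Hl) as U.
  rewrite !U in HPD by (simpl; lia).
  set (c := loc A f) in *.
  destruct Po as [P0 [P1 P2]].
  pose proof (psd_q c (psd_loc A f Hp) P0 P1 P2) as Q.
  assert (H20 : 0 < c 2%nat 0%nat).
  { specialize (Q 1 0). specialize (HPD 1 0 (or_introl R1_neq_R0)).
    replace (c 2%nat 0%nat * 1 ^ 2 + c 1%nat 1%nat * 1 * 0 + c 0%nat 2%nat * 0 ^ 2) with (c 2%nat 0%nat) in Q, HPD by ring.
    lra. }
  assert (H02 : 0 < c 0%nat 2%nat).
  { specialize (Q 0 1). specialize (HPD 0 1 (or_intror R1_neq_R0)).
    replace (c 2%nat 0%nat * 0 ^ 2 + c 1%nat 1%nat * 0 * 1 + c 0%nat 2%nat * 1 ^ 2) with (c 0%nat 2%nat) in Q, HPD by ring.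
    lra. }
  split; [unfold pat_o; auto|]. split; [exact H20|]. split; [exact H02|].
  set (t0 := - c 1%nat 1%nat / (2 * c 2%nat 0%nat)).
  specialize (Q t0 1). specialize (HPD t0 1 (or_intror R1_neq_R0)).
  assert (E : c 2%nat 0%nat * t0 ^ 2 + c 1%nat 1%nat * t0 * 1 + c 0%nat 2%nat * 1 ^ 2 =
     (4 * c 2%nat 0%nat * c 0%nat 2%nat - (c 1%nat 1%nat)^2) / (4 * c 2%nat 0%nat)) by (unfold t0; field; lra).
  rewrite E in Q, HPD.
  assert (0 < (4 * c 2%nat 0%nat * c 0%nat 2%nat - (c 1%nat 1%nat)^2) / (4 * c 2%nat 0%nat)) by lra.
  assert (0 < 4 * c 2%nat 0%nat * c 0%nat 2%nat - (c 1%nat 1%nat)^2); [|lra].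
  apply (Rmult_lt_reg_r (/ (4 * c 2%nat 0%nat))). { apply Rinv_0_lt_compat. lra. }
  rewrite Rmult_0_l. exact H.
Qed.

Lemma p_facts (A : coords) (f : form) (a : nat -> nat -> R) :
  psd f -> loc_coeffs A f a -> D2 a <> 0 -> pat_l (loc A f) ->
  0 < loc A f 0%nat 2%nat /\ 0 < loc A f 4%nat 0%nat /\
  (loc A f 2%nat 1%nat)^2 < 4 * loc A f 0%nat 2%nat * loc A f 4%nat 0%nat.
Proof.
  intros Hp Hl HD Pc. pose proof (loc_uniq A f a Hl) as U.
  unfold D2, Dcoef, hcoef in HD. simpl in HD. rewrite !U in HD by (simpl; lia).
  pose proof (psd_loc A f Hp) as Hpc.
  set (c := loc A f) in *. clearbody c.
  destruct Pc as [[P0 [P1 P2]] [P3 [P4 P5]]].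
  rewrite P3, P4, P5 in HD.
  pose proof (psd_q c Hpc P0 P1 P2 0 1) as Q.
  replace (c 2%nat 0%nat * 0 ^ 2 + c 1%nat 1%nat * 0 * 1 + c 0%nat 2%nat * 1 ^ 2) with (c 0%nat 2%nat) in Q by ring.
  pose proof (quad_nonneg _ _ _ Q (psd_w c Hpc P0 P1 P2 P3 P4 P5)) as W.
  assert (W' : (c 2%nat 1%nat)^2 <> 4 * c 0%nat 2%nat * c 4%nat 0%nat).
  { intros E. apply HD.
    transitivity (2 * ((c 2%nat 1%nat)^2 - 4 * c 0%nat 2%nat * c 4%nat 0%nat)); [ring|rewrite E; ring]. }
  assert (S : (c 2%nat 1%nat)^2 < 4 * c 0%nat 2%nat * c 4%nat 0%nat) by lra.
  assert (0 <= (c 2%nat 1%nat)^2) by apply pow2_ge_0.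
  assert (H02 : 0 < c 0%nat 2%nat).
  { destruct (Rle_lt_or_eq_dec _ _ Q) as [|E]; [assumption|]. rewrite <- E in S. lra. }
  split; [exact H02|]. split; [|exact S].
  destruct (Rlt_or_le 0 (c 4%nat 0%nat)) as [|H40]; [assumption|].
  assert (c 0%nat 2%nat * c 4%nat 0%nat <= 0).
  { rewrite <- (Rmult_0_r (c 0%nat 2%nat)). apply Rmult_le_compat_l; lra. }
  lra.
Qed.

Theorem mainTheorem4 (n m : nat) (s p L : nat -> V3) :
  config n m s p L ->
  (exists f : form,
     F_S n m s p L f /\
     zeroset_eq n m s p f /\
     (forall i, (i < n)%nat -> inp_empty (s i) f) /\
     (forall j, (j < m)%nat -> ord_eq2 (p j) f) /\
     (forall j, (j < m)%nat -> disc_cond (p j) (L j) f)) ->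
  forall g : form, in_span (F_S n m s p L) g <-> I_S n m s p L g.
Proof.
  intros Hcfg [f [[HFs HFl] [HZ [Hinp [_ Hdisc]]]]] g.
  destruct Hcfg as [_ [HpL _]].
  split.
  - intros [l [Hl Hg]]. split.
    + intros i Hi. destruct (Hinp i Hi) as [A [a [HA _]]].
      exists A, (loc A g). split; [exact HA|]. split; [apply loc_coeffs_loc|].
      assert (Hz : forall i' j', (i' + j' <= 4)%nat ->
                 (forall rh, In rh l -> loc A (snd rh) i' j' = 0) -> loc A g i' j' = 0).
      { intros i' j' Hij H. rewrite (loc_feq A g (lincomb l) Hg i' j' Hij). apply span_zero; auto. }
      assert (Hp : forall rh, In rh l -> pat_o (loc A (snd rh))).
      { intros rh Hrh. destruct (Hl rh Hrh) as [Hs _]. destruct (Hs i Hi) as [Hp Hz0].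
        exact (psd_pat_o A (s i) _ Hp HA Hz0). }
      unfold ord_ge2. repeat split; apply Hz; try (simpl; lia); intros rh Hrh; apply Hp, Hrh.
    + intros j Hj. destruct (Hdisc j Hj) as [A [a [HA _]]].
      exists A, (loc A g). split; [exact HA|]. split; [apply loc_coeffs_loc|].
      assert (Hz : forall i' j', (i' + j' <= 4)%nat ->
                 (forall rh, In rh l -> loc A (snd rh) i' j' = 0) -> loc A g i' j' = 0).
      { intros i' j' Hij H. rewrite (loc_feq A g (lincomb l) Hg i' j' Hij). apply span_zero; auto. }
      assert (Hp : forall rh, In rh l -> pat_l (loc A (snd rh))).
      { intros rh Hrh. destruct (Hl rh Hrh) as [_ Hf].
        exact (fl_pat A (p j) (L j) _ (proj1 (proj2 (HpL j Hj))) (Hf j Hj) HA). }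
      unfold ord_ge2. repeat split; apply Hz; try (simpl; lia); intros rh Hrh;
        destruct (Hp rh Hrh) as [[? [? ?]] [? [? ?]]]; assumption.
  - intros [HIs HIl].
    assert (Htriv : (n = 0%nat /\ m = 0%nat) \/ psd f).
    { destruct n as [|n']; [destruct m as [|m']|].
      - left; auto.
      - right. exact (proj1 (HFl 0%nat ltac:(lia))).
      - right. exact (proj1 (HFs 0%nat ltac:(lia))). }
    destruct Htriv as [[-> ->]|Hpsd].
    { exists ((1, g) :: nil). split.
      - intros rh [E|[]]. subst rh. split; intros; lia.
      - intros i j _. unfold lincomb; simpl. ring. }
    assert (Hloc : forall t, t <> v0 -> ev f t = 0 ->
      exists d, 0 < d /\ exists e, 0 < e /\ forall v, near3 d v t -> 0 <= ev f v + e * ev g v).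
    { intros t Ht Hft. destruct (proj1 (HZ t Ht) Hft) as [[i [Hi Ei]]|[j [Hj Ej]]].
      - destruct (Hinp i Hi) as [A [a [HA [Hla [Hoa HPD]]]]].
        destruct (s_facts A (s i) f a Hpsd Hla Hoa HPD) as [Pc [H20 [H02 HD]]].
        pose proof (Ipt_pat A (s i) g (HIs i Hi) HA) as Pd.
        destruct (local_s _ _ Pc Pd H20 H02 HD) as [r [Hr [e [He H]]]].
        destruct (cone A (s i) t f g r e HA Ei Hr H) as [d [Hd Hd']].
        exists d. split; [exact Hd|]. exists e. auto.
      - destruct (Hdisc j Hj) as [A [a [HA [Hla HD2]]]].
        pose proof (proj1 (proj2 (HpL j Hj))) as HL.
        pose proof (fl_pat A (p j) (L j) f HL (HFl j Hj) HA) as Pc.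
        pose proof (Ifl_pat A (p j) (L j) g HL (HIl j Hj) HA) as Pd.
        destruct (p_facts A f a Hpsd Hla HD2 Pc) as [H02 [H40 HD]].
        destruct (local_p _ _ Pc Pd H02 H40 HD) as [r [Hr [e [He H]]]].
        destruct (cone A (p j) t f g r e (proj1 HA) Ej Hr H) as [d [Hd Hd']].
        exists d. split; [exact Hd|]. exists e. auto. }
    destruct (global_eps f g Hpsd Hloc) as [eps [Heps Hglob]].
    set (h := fun i j => eps * g i j + f i j).
    assert (Hph : psd h).
    { intros v. unfold h. rewrite ev_lin. specialize (Hglob v). lra. }
    assert (Hgs : forall i, (i < n)%nat -> ev g (s i) = 0).
    { intros i Hi. destruct (HIs i Hi) as [A' [b [HA' [Hlb Hob]]]].
      apply (c00_zero A' (s i) g HA'). exact (proj1 (ord_pat A' g b Hlb Hob)). }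
    assert (Hgp : forall j, (j < m)%nat -> ev g (p j) = 0).
    { intros j Hj. destruct (HIl j Hj) as [A' [b [HA' [Hlb [Hob _]]]]].
      apply (c00_zero A' (p j) g (proj1 HA')). exact (proj1 (ord_pat A' g b Hlb Hob)). }
    assert (HFh : F_S n m s p L h).
    { split.
      - intros i Hi. split; [exact Hph|]. unfold h. rewrite ev_lin, (Hgs i Hi), (proj2 (HFs i Hi)). ring.
      - intros j Hj. split; [exact Hph|]. split.
        + unfold h. rewrite ev_lin, (Hgp j Hj), (proj1 (proj2 (HFl j Hj))). ring.
        + destruct (Hdisc j Hj) as [A [a [HA _]]].
          pose proof (proj1 (proj2 (HpL j Hj))) as HL.
          pose proof (fl_pat A (p j) (L j) f HL (HFl j Hj) HA) as [_ [Pc _]].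
          pose proof (Ifl_pat A (p j) (L j) g HL (HIl j Hj) HA) as [_ [Pd _]].
          exists A, (loc A h). split; [exact HA|]. split; [apply loc_coeffs_loc|].
          unfold h. rewrite (loc_lin A eps g f 2%nat 0%nat ltac:(lia)), Pc, Pd. ring. }
    exists ((1 / eps, h) :: (- 1 / eps, f) :: nil). split.
    + intros rh [E|[E|[]]]; subst rh; simpl.
      * exact HFh.
      * split; [exact HFs|exact HFl].
    + intros i j _. unfold lincomb, h; simpl. field. lra.
Qed.
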